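(* The following four rules are admissible in $\mathbf{CL12}$ (whenever all premises are provable, so is the conclusion), where $y$ is a variable not occurring in the conclusion: $\sqcap$-Introduction: from $\vec E\circ\!\!-\,F^{\vee}[G_0]$ and $\vec E\circ\!\!-\,F^{\vee}[G_1]$ infer $\vec E\circ\!\!-\,F^{\vee}[G_0\sqcap G_1]$; $\sqcup$-Introduction: from $\vec E,F^{\wedge}[G_0],\vec K\circ\!\!-\,H$ and $\vec E,F^{\wedge}[G_1],\vec K\circ\!\!-\,H$ infer $\vec E,F^{\wedge}[G_0\sqcup G_1],\vec K\circ\!\!-\,H$; $\sqcap x$-Introduction: from $\vec E\circ\!\!-\,F^{\vee}[G(y)]$ infer $\vec E\circ\!\!-\,F^{\vee}[\sqcap xG(x)]$; $\sqcup x$-Introduction: from $\vec E,F^{\wedge}[G(y)],\vec K\circ\!\!-\,H$ infer $\vec E,F^{\wedge}[\sqcup xG(x)],\vec K\circ\!\!-\,H$.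
   Context: Notation: $F^{\vee}[G]$ (resp. $F^{\wedge}[G]$) denotes a formula $F$ with a fixed surface occurrence of $G$ that is not in the scope of any $\wedge$ (resp. any $\vee$); $F^{\vee}[G']$ denotes the result of replacing that occurrence by $G'$, and similarly for $F^{\wedge}$. $G(y)$ is the result of replacing all free occurrences of $x$ in $G(x)$ by $y$. Language. Fix an infinite set of variables and an infinite, disjoint set of constants $\{0,1,10,11,100,\ldots\}$ (binary numerals). There are nonlogical predicate and function letters, each with a fixed arity (infinitely many of each arity), and the binary logical predicate letter $=$. Formulas are built from atomic formulas and their negations, the $0$-ary connectives $\top,\bot$, binary $\wedge,\vee$ (parallel) and $\sqcap,\sqcup$ (choice), blind quantifiers $\forall,\exists$ and choice quantifiers $\sqcap x,\sqcup x$. For nonatomic $E$, $\neg E$ abbreviates its De Morgan dual and $E\to F$ abbreviates $\neg E\vee F$. A sequent is $E_1,\ldots,E_n\circ\!\!-\,F$ ($n\ge0$); free and bound variables of any sequent are assumed disjoint. $\vec E,\vec K,\ldots$ denote finite sequences of formulas. Elementarization: $\|F\|$ replaces every $\sqcup$- and $\sqcup x$-subformula by $\bot$ and every $\sqcap$- and $\sqcap x$-subformula by $\top$; $\|G_1,\ldots,G_n\circ\!\!-\,F\|=\|G_1\|\wedge\cdots\wedge\|G_n\|\to\|F\|$. A sequent is stable iff its elementarization is valid in classical first-order logic with function letters, constants and identity. A surface occurrence is one not in the scope of a choice operator ($\sqcap,\sqcup,\sqcap x,\sqcup x$); $F[E]$ denotes a formula with a fixed surface occurrence of $E$, and $F[H]$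 the result of replacing that occurrence by $H$. The rules of $\mathbf{CL12}$: - $\sqcup$-Choose: from $\vec G\circ\!\!-\,F[H_i]$ infer $\vec G\circ\!\!-\,F[H_0\sqcup H_1]$ ($i\in\{0,1\}$). - $\sqcap$-Choose: from $\vec G,E[H_i],\vec K\circ\!\!-\,F$ infer $\vec G,E[H_0\sqcap H_1],\vec K\circ\!\!-\,F$. - $\sqcup x$-Choose: from $\vec G\circ\!\!-\,F[H(\mathfrak t)]$ infer $\vec G\circ\!\!-\,F[\sqcup xH(x)]$. - $\sqcap x$-Choose: from $\vec G,E[H(\mathfrak t)],\vec K\circ\!\!-\,F$ infer $\vec G,E[\sqcap xH(x)],\vec K\circ\!\!-\,F$. ($\mathfrak t$ a constant or a variable with no bound occurrences in the premise.) - Replicate: from $\vec G,E,\vec K,E\circ\!\!-\,F$ infer $\vec G,E,\vec K\circ\!\!-\,F$. - Wait: from $Y_1,\ldots,Y_n$ ($n\ge0$) infer $X$, provided: (1) whenever $X$ is $\vec G\circ\!\!-\,F[H_0\sqcap H_1]$, both $\vec G\circ\!\!-\,F[H_0]$ and $\vec G\circ\!\!-\,F[H_1]$ are among the $Y_i$; (2) whenever $X$ is $\vec G,E[H_0\sqcup H_1],\vec K\circ\!\!-\,F$, both $\vec G,E[H_0],\vec K\circ\!\!-\,F$ and $\vec G,E[H_1],\vec K\circ\!\!-\,F$ are among the $Y_i$; (3) whenever $X$ is $\vec G\circ\!\!-\,F[\sqcap xH(x)]$, for some variable $y$ not occurring in $X$, $\vec G\circ\!\!-\,F[H(y)]$ is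 among the $Y_i$; (4) whenever $X$ is $\vec G,E[\sqcup xH(x)],\vec K\circ\!\!-\,F$, for some $y$ not occurring in $X$, $\vec G,E[H(y)],\vec K\circ\!\!-\,F$ is among the $Y_i$; (5) $X$ is stable. A $\mathbf{CL12}$-proof of $X$ is a finite sequence of sequents ending in $X$, each following by a rule from earlier members. *)

(* Defs.v *)
From Stdlib Require Import List Arith.
Import ListNotations.

(* A function letter is a pair (name, arity); the arity of the letter
   in [App f ts] is [length ts], so f-with-arity-n and f-with-arity-m are
   different letters, and there are infinitely many letters of each arity. *)
Inductive term : Type :=
| Var (v : nat)
| Const (c : nat)
| App (f : nat) (ts : list term).

(* Predicate letters likewise: (name, length of argument list).  [Eq] is the
   logical identity predicate. Negation applies only to atoms. *)
Inductive form : Type :=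
| Atom (p : nat) (ts : list term)
| NAtom (p : nat) (ts : list term)
| Eq (t1 t2 : term)
| NEq (t1 t2 : term)
| Top
| Bot
| And (A B : form)
| Or (A B : form)
| Chand (A B : form)        (* choice conjunction  ⊓ *)
| Chor (A B : form)         (* choice disjunction  ⊔ *)
| Forall (x : nat) (A : form)
| Exists (x : nat) (A : form)
| Chall (x : nat) (A : form)    (* choice ⊓x *)
| Chex (x : nat) (A : form).    (* choice ⊔x *)

(* A sequent  E1,...,En o- F *)
Definition sequent : Type := (list form * form)%type.

Fixpoint term_vars (t : term) : list nat :=
  match t with
  | Var v => [v]
  | Const _ => []
  | App _ ts => flat_map term_vars ts
  end.

Fixpoint vars (F : form) : list nat :=
  match F with
  | Atom _ ts | NAtom _ ts => flat_map term_vars ts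
  | Eq t1 t2 | NEq t1 t2 => term_vars t1 ++ term_vars t2
  | Top | Bot => []
  | And A B | Or A B | Chand A B | Chor A B => vars A ++ vars B
  | Forall x A | Exists x A | Chall x A | Chex x A => x :: vars A
  end.

Fixpoint free_vars (F : form) : list nat :=
  match F with
  | Atom _ ts | NAtom _ ts => flat_map term_vars ts
  | Eq t1 t2 | NEq t1 t2 => term_vars t1 ++ term_vars t2
  | Top | Bot => []
  | And A B | Or A B | Chand A B | Chor A B => free_vars A ++ free_vars B
  | Forall x A | Exists x A | Chall x A | Chex x A =>
      filter (fun v => negb (Nat.eqb v x)) (free_vars A)
  end.

Fixpoint bound_vars (F : form) : list nat :=
  match F with
  | And A B | Or A B | Chand A B | Chor A B => bound_vars A ++ bound_vars B
  | Forall x A | Exists x A | Chall x A | Chex x A => x :: bound_vars A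
  | _ => []
  end.

Definition seq_forms (S : sequent) : list form := snd S :: fst S.

Definition occurs_seq (y : nat) (S : sequent) : Prop :=
  exists F, In F (seq_forms S) /\ In y (vars F).

Definition bound_in_seq (y : nat) (S : sequent) : Prop :=
  exists F, In F (seq_forms S) /\ In y (bound_vars F).

Definition free_in_seq (y : nat) (S : sequent) : Prop :=
  exists F, In F (seq_forms S) /\ In y (free_vars F).

(* standing assumption: free and bound variables of a sequent are disjoint *)
Definition proper_seq (S : sequent) : Prop :=
  forall y, free_in_seq y S -> bound_in_seq y S -> False.

Fixpoint subst_term (x : nat) (s : term) (t : term) : term :=
  match t with
  | Var v => if Nat.eqb v x then s else Var v
  | Const c => Const c
  | App f ts => App f (map (subst_term x s) ts)
  end.

Fixpoint subst (x : nat) (s : term) (F : form) : form :=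
  match F with
  | Atom p ts => Atom p (map (subst_term x s) ts)
  | NAtom p ts => NAtom p (map (subst_term x s) ts)
  | Eq t1 t2 => Eq (subst_term x s t1) (subst_term x s t2)
  | NEq t1 t2 => NEq (subst_term x s t1) (subst_term x s t2)
  | Top => Top
  | Bot => Bot
  | And A B => And (subst x s A) (subst x s B)
  | Or A B => Or (subst x s A) (subst x s B)
  | Chand A B => Chand (subst x s A) (subst x s B)
  | Chor A B => Chor (subst x s A) (subst x s B)
  | Forall z A => if Nat.eqb z x then Forall z A else Forall z (subst x s A)
  | Exists z A => if Nat.eqb z x then Exists z A else Exists z (subst x s A)
  | Chall z A => if Nat.eqb z x then Chall z A else Chall z (subst x s A)
  | Chex z A => if Nat.eqb z x then Chex z A else Chex z (subst x s A)
  end.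

(* A surface occurrence is one not in the scope of a choice operator; since
   negation only applies to atoms, the path to it goes through /\, \/, ∀, ∃. *)
Inductive ctx : Type :=
| Hole
| CAndL (c : ctx) (B : form)
| CAndR (A : form) (c : ctx)
| COrL (c : ctx) (B : form)
| COrR (A : form) (c : ctx)
| CForall (x : nat) (c : ctx)
| CExists (x : nat) (c : ctx).

Fixpoint fill (c : ctx) (H : form) : form :=
  match c with
  | Hole => H
  | CAndL c B => And (fill c H) B
  | CAndR A c => And A (fill c H)
  | COrL c B => Or (fill c H) B
  | COrR A c => Or A (fill c H)
  | CForall x c => Forall x (fill c H)
  | CExists x c => Exists x (fill c H)
  end.

(* the hole is not in the scope of any /\   (contexts for F^∨[ ]) *)
Fixpoint no_and (c : ctx) : Prop :=
  match c with
  | Hole => True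
  | CAndL _ _ | CAndR _ _ => False
  | COrL c _ | COrR _ c | CForall _ c | CExists _ c => no_and c
  end.

(* the hole is not in the scope of any \/   (contexts for F^∧[ ]) *)
Fixpoint no_or (c : ctx) : Prop :=
  match c with
  | Hole => True
  | COrL _ _ | COrR _ _ => False
  | CAndL c _ | CAndR _ c | CForall _ c | CExists _ c => no_or c
  end.

Fixpoint neg (F : form) : form :=
  match F with
  | Atom p ts => NAtom p ts
  | NAtom p ts => Atom p ts
  | Eq t1 t2 => NEq t1 t2
  | NEq t1 t2 => Eq t1 t2
  | Top => Bot
  | Bot => Top
  | And A B => Or (neg A) (neg B)
  | Or A B => And (neg A) (neg B)
  | Chand A B => Chor (neg A) (neg B)
  | Chor A B => Chand (neg A) (neg B)
  | Forall x A => Exists x (neg A)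
  | Exists x A => Forall x (neg A)
  | Chall x A => Chex x (neg A)
  | Chex x A => Chall x (neg A)
  end.

Fixpoint elem (F : form) : form :=
  match F with
  | Chor _ _ | Chex _ _ => Bot
  | Chand _ _ | Chall _ _ => Top
  | And A B => And (elem A) (elem B)
  | Or A B => Or (elem A) (elem B)
  | Forall x A => Forall x (elem A)
  | Exists x A => Exists x (elem A)
  | G => G
  end.

Fixpoint big_and (l : list form) : form :=
  match l with
  | [] => Top
  | [G] => G
  | G :: l' => And G (big_and l')
  end.

Definition elem_seq (S : sequent) : form :=
  Or (neg (big_and (map elem (fst S)))) (elem (snd S)).

Record structure : Type := {
  dom : Type;
  dom_inh : dom;
  c_int : nat -> dom;
  f_int : nat -> list dom -> dom;
  p_int : nat -> list dom -> Prop
}.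

Fixpoint eval (M : structure) (e : nat -> dom M) (t : term) : dom M :=
  match t with
  | Var v => e v
  | Const c => c_int M c
  | App f ts => f_int M f (map (eval M e) ts)
  end.

Definition upd {D : Type} (e : nat -> D) (x : nat) (d : D) : nat -> D :=
  fun v => if Nat.eqb v x then d else e v.

(* Choice operators never occur in elementarizations; they are given
   their classical counterparts here only to make [sat] total. *)
Fixpoint sat (M : structure) (e : nat -> dom M) (F : form) : Prop :=
  match F with
  | Atom p ts => p_int M p (map (eval M e) ts)
  | NAtom p ts => ~ p_int M p (map (eval M e) ts)
  | Eq t1 t2 => eval M e t1 = eval M e t2
  | NEq t1 t2 => eval M e t1 <> eval M e t2
  | Top => True
  | Bot => False
  | And A B | Chand A B => sat M e A /\ sat M e B
  | Or A B | Chor A B => sat M e A \/ sat M e B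
  | Forall x A | Chall x A => forall d, sat M (upd e x d) A
  | Exists x A | Chex x A => exists d, sat M (upd e x d) A
  end.

Definition valid (F : form) : Prop :=
  forall (M : structure) (e : nat -> dom M), sat M e F.

Definition stable (S : sequent) : Prop := valid (elem_seq S).

Definition wait_ok (earlier : list sequent) (X : sequent) : Prop :=
  (forall Gs c H0 H1, X = (Gs, fill c (Chand H0 H1)) ->
      In (Gs, fill c H0) earlier /\ In (Gs, fill c H1) earlier) /\
  (forall Gs c H0 H1 Ks F, X = (Gs ++ fill c (Chor H0 H1) :: Ks, F) ->
      In (Gs ++ fill c H0 :: Ks, F) earlier /\
      In (Gs ++ fill c H1 :: Ks, F) earlier) /\
  (forall Gs c x H, X = (Gs, fill c (Chall x H)) ->
      exists y, ~ occurs_seq y X /\ In (Gs, fill c (subst x (Var y) H)) earlier) /\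
  (forall Gs c x H Ks F, X = (Gs ++ fill c (Chex x H) :: Ks, F) ->
      exists y, ~ occurs_seq y X /\
        In (Gs ++ fill c (subst x (Var y) H) :: Ks, F) earlier) /\
  stable X.

Definition ok_choice_term (t : term) (premise : sequent) : Prop :=
  (exists c, t = Const c) \/ (exists y, t = Var y /\ ~ bound_in_seq y premise).

Definition follows (earlier : list sequent) (X : sequent) : Prop :=
  (exists Gs c H0 H1 (i : bool),
      X = (Gs, fill c (Chor H0 H1)) /\
      In (Gs, fill c (if i then H1 else H0)) earlier) \/
  (exists Gs c H0 H1 Ks F (i : bool),
      X = (Gs ++ fill c (Chand H0 H1) :: Ks, F) /\
      In (Gs ++ fill c (if i then H1 else H0) :: Ks, F) earlier) \/
  (exists Gs c x H t,
      X = (Gs, fill c (Chex x H)) /\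
      ok_choice_term t (Gs, fill c (subst x t H)) /\
      In (Gs, fill c (subst x t H)) earlier) \/
  (exists Gs c x H Ks F t,
      X = (Gs ++ fill c (Chall x H) :: Ks, F) /\
      ok_choice_term t (Gs ++ fill c (subst x t H) :: Ks, F) /\
      In (Gs ++ fill c (subst x t H) :: Ks, F) earlier) \/
  (exists Gs E Ks F,
      X = (Gs ++ E :: Ks, F) /\
      In (Gs ++ E :: Ks ++ [E], F) earlier) \/
  wait_ok earlier X.

(* A CL12-proof: a finite sequence of sequents, each following by a rule
   from earlier members.  All members are sequents, hence proper. *)
Definition is_proof (l : list sequent) : Prop :=
  forall i, i < length l ->
    proper_seq (nth i l ([], Top)) /\
    follows (firstn i l) (nth i l ([], Top)).

Definition provable (X : sequent) : Prop :=
  exists l, is_proof l /\ l <> [] /\ last l ([], Top) = X.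

(* Main.v *)
From Stdlib Require Import List Arith Lia Classical.
Import ListNotations.
Require Import Defs.

Fixpoint term_ind' (P : term -> Prop) (Hv : forall v, P (Var v)) (Hc : forall c, P (Const c))
  (Ha : forall f ts, List.Forall P ts -> P (App f ts)) (t : term) : P t :=
  match t with
  | Var v => Hv v
  | Const c => Hc c
  | App f ts => Ha f ts ((fix go (l : list term) : List.Forall P l :=
       match l with [] => Forall_nil _ | u :: l' => Forall_cons _ (term_ind' P Hv Hc Ha u) (go l') end) ts)
  end.

Lemma subst_term_notin : forall y s t, ~ In y (term_vars t) -> subst_term y s t = t.
Proof.
  intros y s t; induction t using term_ind'; simpl; intros Hn.
  - destruct (Nat.eqb_spec v y); subst; [exfalso; auto|auto].
  - auto.
  - f_equal. induction H; simpl in *; auto.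
    rewrite in_app_iff in Hn. f_equal; auto.
Qed.

Lemma term_vars_subst : forall x s t v, In v (term_vars (subst_term x s t)) ->
  (In v (term_vars t) /\ v <> x) \/ In v (term_vars s).
Proof.
  intros x s t; induction t using term_ind'; simpl; intros w Hn.
  - destruct (Nat.eqb_spec v x); subst; auto.
    simpl in Hn; destruct Hn as [Hn|[]]; subst; left; split; auto.
  - destruct Hn.
  - induction H; simpl in *; [destruct Hn|].
    rewrite in_app_iff in Hn. destruct Hn as [Hn|Hn].
    + destruct (H _ Hn) as [[]|]; auto. left; split; auto; apply in_app_iff; auto.
    + destruct (IHForall Hn) as [[]|]; auto. left; split; auto; apply in_app_iff; auto.
Qed.

Lemma eval_subst : forall M e y z t,
  eval M e (subst_term y (Var z) t) = eval M (upd e y (e z)) t.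
Proof.
  intros M e y z t; induction t using term_ind'; simpl.
  - unfold upd. destruct (Nat.eqb v y); reflexivity.
  - reflexivity.
  - f_equal. rewrite map_map. induction H; simpl; auto. f_equal; auto.
Qed.

Lemma eval_ext : forall M e e' t, (forall v, e v = e' v) -> eval M e t = eval M e' t.
Proof.
  intros M e e' t Hv; induction t using term_ind'; simpl; auto.
  f_equal. induction H; simpl; auto. f_equal; auto.
Qed.

Lemma subst_term_comm : forall x y s t u, x <> y -> ~ In x (term_vars s) ->
  subst_term y s (subst_term x t u) = subst_term x (subst_term y s t) (subst_term y s u).
Proof.
  intros x y s t u Hxy Hs; induction u using term_ind'; simpl.
  - destruct (Nat.eqb_spec v x); subst.
    + simpl. destruct (Nat.eqb_spec x y); [congruence|]. simpl. rewrite Nat.eqb_refl. auto.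
    + simpl. destruct (Nat.eqb_spec v y); subst.
      * rewrite subst_term_notin; auto.
      * simpl. destruct (Nat.eqb_spec v x); congruence.
  - auto.
  - f_equal. rewrite !map_map. induction H; simpl; auto. f_equal; auto.
Qed.

Lemma subst_term_fresh2 : forall x y z u, ~ In y (term_vars u) ->
  subst_term y (Var z) (subst_term x (Var y) u) = subst_term x (Var z) u.
Proof.
  intros x y z u; induction u using term_ind'; simpl; intros Hn.
  - destruct (Nat.eqb_spec v x); simpl.
    + rewrite Nat.eqb_refl; auto.
    + destruct (Nat.eqb_spec v y); subst; [exfalso; auto|auto].
  - auto.
  - f_equal. rewrite map_map. induction H; simpl in *; auto.
    rewrite in_app_iff in Hn. f_equal; auto.
Qed.

Fixpoint cnt (F : form) : nat :=
  match F with
  | And A B | Or A B => cnt A + cnt B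
  | Chand A B | Chor A B => S (cnt A + cnt B)
  | Forall _ A | Exists _ A => cnt A
  | Chall _ A | Chex _ A => S (cnt A)
  | _ => 0
  end.

Lemma cnt_subst : forall x t F, cnt (subst x t F) = cnt F.
Proof. intros x t F; induction F; simpl; auto;
  try (destruct (Nat.eqb z x); simpl; auto); try (destruct (Nat.eqb x0 x); simpl; auto). Qed.

Ltac qcase := match goal with |- context [Nat.eqb ?a ?b] => destruct (Nat.eqb_spec a b) end.

Lemma map_subst_notin : forall y s ts, ~ In y (flat_map term_vars ts) -> map (subst_term y s) ts = ts.
Proof.
  intros y s ts H; induction ts; simpl in *; auto.
  rewrite in_app_iff in H. rewrite subst_term_notin; [|tauto]. f_equal. apply IHts. tauto.
Qed.

Lemma subst_notin : forall y s F, ~ In y (vars F) -> subst y s F = F.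
Proof.
  intros y s F; induction F; simpl; intros H;
    try (rewrite in_app_iff in H);
    try (f_equal; solve [auto | apply map_subst_notin; auto | apply subst_term_notin; tauto]).
  all: try (qcase; [reflexivity| f_equal; apply IHF; tauto]).
Qed.

Lemma bound_subst : forall x t F, bound_vars (subst x t F) = bound_vars F.
Proof.
  intros x t F; induction F; simpl; auto; try (rewrite IHF1, IHF2; auto);
  try (qcase; simpl; auto; rewrite IHF; auto).
Qed.

Lemma flat_subst : forall x t ts v, In v (flat_map term_vars (map (subst_term x t) ts)) ->
  (In v (flat_map term_vars ts) /\ v <> x) \/ In v (term_vars t).
Proof.
  intros x t ts v H; induction ts; simpl in *; auto.
  rewrite in_app_iff in H |- *. destruct H as [H|H].
  - destruct (term_vars_subst _ _ _ _ H) as [[]|]; auto.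
  - destruct (IHts H) as [[]|]; auto.
Qed.

Lemma free_subst : forall x t F v, In v (free_vars (subst x t F)) ->
  (In v (free_vars F) /\ v <> x) \/ In v (term_vars t).
Proof.
  intros x t F; induction F; simpl; intros v H; auto;
  try (apply flat_subst; auto);
  try (rewrite in_app_iff in H |- *; destruct H as [H|H];
       [destruct (term_vars_subst _ _ _ _ H) as [[]|]; auto
       |destruct (term_vars_subst _ _ _ _ H) as [[]|]; auto]);
  try (rewrite in_app_iff in H |- *; destruct H as [H|H];
       [destruct (IHF1 _ H) as [[]|]; auto | destruct (IHF2 _ H) as [[]|]; auto]).
  all: revert H; qcase; subst; simpl; intros H;
    rewrite filter_In in H; destruct H as [H1 H2];
    [ left; split; [apply filter_In; auto|]; intro; subst; rewrite Nat.eqb_refl in H2; discriminate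
    | destruct (IHF _ H1) as [[]|]; auto; left; split; auto; apply filter_In; auto].
Qed.

Lemma flat_vsubst : forall x t ts v, In v (flat_map term_vars (map (subst_term x t) ts)) ->
  In v (flat_map term_vars ts) \/ In v (term_vars t).
Proof. intros. destruct (flat_subst _ _ _ _ H) as [[]|]; auto. Qed.

Lemma vars_subst : forall x t F v, In v (vars (subst x t F)) -> In v (vars F) \/ In v (term_vars t).
Proof.
  intros x t F; induction F; simpl; intros v H; auto;
  try (eapply flat_vsubst; eauto);
  try (rewrite in_app_iff in H |- *; destruct H as [H|H];
       [destruct (term_vars_subst _ _ _ _ H) as [[]|]; auto
       |destruct (term_vars_subst _ _ _ _ H) as [[]|]; auto]);
  try (rewrite in_app_iff in H |- *; destruct H as [H|H];
       [destruct (IHF1 _ H); auto | destruct (IHF2 _ H); auto]).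
  all: revert H; qcase; subst; simpl; intros [H|H]; auto; destruct (IHF _ H); auto.
Qed.

Lemma map_subst_comm : forall x y s t ts, x <> y -> ~ In x (term_vars s) ->
  map (subst_term y s) (map (subst_term x t) ts) =
  map (subst_term x (subst_term y s t)) (map (subst_term y s) ts).
Proof. intros; rewrite !map_map; apply map_ext; intros; apply subst_term_comm; auto. Qed.

Lemma subst_comm : forall x y s t F, x <> y -> ~ In x (term_vars s) -> ~ In y (bound_vars F) ->
  subst y s (subst x t F) = subst x (subst_term y s t) (subst y s F).
Proof.
  intros x y s t F Hxy Hs; induction F; simpl; intros Hb;
  try (rewrite in_app_iff in Hb);
  try (f_equal; solve [apply map_subst_comm; auto | apply subst_term_comm; auto | auto]).
  all: destruct (Nat.eqb_spec x0 x); destruct (Nat.eqb_spec x0 y); subst; try tauto; simpl;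
       repeat (qcase; try congruence); f_equal; auto.
Qed.

Lemma map_fresh2 : forall x y z ts, ~ In y (flat_map term_vars ts) ->
  map (subst_term y (Var z)) (map (subst_term x (Var y)) ts) = map (subst_term x (Var z)) ts.
Proof.
  intros x y z ts H; induction ts; simpl in *; auto. rewrite in_app_iff in H.
  rewrite subst_term_fresh2 by tauto. f_equal; apply IHts; tauto.
Qed.

Lemma subst_fresh2 : forall x y z F, ~ In y (vars F) ->
  subst y (Var z) (subst x (Var y) F) = subst x (Var z) F.
Proof.
  intros x y z F; induction F; simpl; intros H; try (rewrite in_app_iff in H);
  try (f_equal; solve [apply map_fresh2; auto | apply subst_term_fresh2; tauto | auto]).
  all: destruct (Nat.eqb_spec x0 x); subst; simpl;
       (destruct (Nat.eqb_spec x y); [subst; tauto|]) || (destruct (Nat.eqb_spec x0 y); [subst; tauto|]);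
       f_equal; try (apply subst_notin); auto.
Qed.

Lemma sat_ext : forall M F e e', (forall v, e v = e' v) -> (sat M e F <-> sat M e' F).
Proof.
  intros M F; induction F; intros e e' He; simpl;
  try (rewrite (map_ext (eval M e) (eval M e')) by (intros; apply eval_ext; auto); tauto);
  try (rewrite (eval_ext M e e' t1), (eval_ext M e e' t2) by auto; tauto);
  try (rewrite (IHF1 e e'), (IHF2 e e') by auto; tauto); try tauto.
  all: assert (Hu : forall d v, upd e x d v = upd e' x d v) by (intros; unfold upd; destruct (Nat.eqb v x); auto).
  all: split; first [intros H d; specialize (H d) | intros [d H]; exists d];
       first [apply (IHF _ _ (Hu d)); exact H | apply (IHF _ _ (Hu d)) in H; exact H].
Qed.

Lemma sat_subst : forall M F e y z, ~ In z (bound_vars F) ->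
  (sat M e (subst y (Var z) F) <-> sat M (upd e y (e z)) F).
Proof.
  intros M F; induction F; intros e y z Hb; simpl in *;
  try (rewrite map_map; rewrite (map_ext _ (eval M (upd e y (e z)))) by (intros; apply eval_subst); tauto);
  try (rewrite !eval_subst; tauto);
  try (rewrite in_app_iff in Hb; rewrite IHF1, IHF2 by tauto; tauto); try tauto.
  all: destruct (Nat.eqb_spec x y); subst; simpl.
  all: try (assert (Hu : forall d v, upd (upd e y (e z)) y d v = upd e y d v)
             by (intros; unfold upd; destruct (Nat.eqb v y); auto)).
  all: try (split; [intros H d; specialize (H d) | intros H d; specialize (H d)];
            (apply (sat_ext M F _ _ (Hu d)); exact H) || (apply (sat_ext M F _ _ (Hu d)) in H; exact H)).
  all: try (split; intros [d H]; exists d; [apply (sat_ext M F _ _ (Hu d)); exact H | apply (sat_ext M F _ _ (Hu d)) in H; exact H]).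
  all: assert (Hu2 : forall d v, upd (upd e x d) y (upd e x d z) v = upd (upd e y (e z)) x d v)
         by (intros; unfold upd; destruct (Nat.eqb_spec z x); [subst; tauto|];
             destruct (Nat.eqb_spec v y); destruct (Nat.eqb_spec v x); subst; auto; congruence).
  all: try (split; intros H d; specialize (H d); rewrite IHF in * by tauto;
            [apply (sat_ext M F _ _ (Hu2 d)); exact H | apply (sat_ext M F _ _ (Hu2 d)) in H; exact H]).
  all: split; intros [d H]; exists d; rewrite IHF in * by tauto;
       [apply (sat_ext M F _ _ (Hu2 d)); exact H | apply (sat_ext M F _ _ (Hu2 d)) in H; exact H].
Qed.

Lemma sat_neg : forall M F e, sat M e (neg F) <-> ~ sat M e F.
Proof.
  intros M F; induction F; intros e; simpl;
  try (split; [tauto| intro H; apply NNPP; exact H]); try tauto.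
  all: try (rewrite IHF1, IHF2; split; [tauto| intro H; apply not_and_or; exact H]).
  all: try (rewrite IHF1, IHF2; tauto).
  all: split.
  all: try (intros [d H] H'; apply IHF in H; apply H; apply H').
  all: try (intro H; apply not_all_ex_not in H; destruct H as [d H]; exists d; apply IHF; exact H).
  all: try (intros H [d H']; apply IHF in H'; auto).
  all: intros H d; apply IHF; intro H'; apply H; exists d; exact H'.
Qed.

Lemma elem_subst : forall y s F, elem (subst y s F) = subst y s (elem F).
Proof.
  intros y s F; induction F; simpl; auto; try (rewrite IHF1, IHF2; auto);
  try (qcase; simpl; auto; rewrite IHF; auto).
Qed.

Lemma neg_subst : forall y s F, neg (subst y s F) = subst y s (neg F).
Proof.
  intros y s F; induction F; simpl; auto; try (rewrite IHF1, IHF2; auto);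
  try (qcase; simpl; auto; rewrite IHF; auto).
Qed.

Lemma big_and_subst : forall y s l, big_and (map (subst y s) l) = subst y s (big_and l).
Proof.
  intros y s l; induction l as [|a l IH]; simpl; auto.
  destruct l; simpl in *; auto. rewrite IH. auto.
Qed.

Lemma bound_elem : forall F v, In v (bound_vars (elem F)) -> In v (bound_vars F).
Proof. intros F; induction F; simpl; intros v H; auto; try rewrite in_app_iff in *; firstorder. Qed.

Lemma bound_neg : forall F, bound_vars (neg F) = bound_vars F.
Proof. intros F; induction F; simpl; auto; try (rewrite IHF1, IHF2); try rewrite IHF; auto. Qed.

Lemma bound_big_and : forall l v, In v (bound_vars (big_and l)) -> exists F, In F l /\ In v (bound_vars F).
Proof.
  intros l v; induction l as [|a l IH]; simpl; intros H; [destruct H|].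
  destruct l as [|b l]. - exists a; auto.
  - simpl in H. rewrite in_app_iff in H. destruct H as [H|H]; [exists a; auto|].
    destruct (IH H) as [F [H1 H2]]; exists F; auto.
Qed.

Lemma sat_big_and : forall M e l, sat M e (big_and l) -> forall F, In F l -> sat M e F.
Proof.
  intros M e l; induction l as [|a l IH]; simpl; intros H F HF; [destruct HF|].
  destruct l as [|b l]. - destruct HF as [<-|[]]; auto.
  - destruct H. destruct HF as [<-|HF]; auto.
Qed.

Definition chead (G : form) : Prop :=
  match G with Chand _ _ | Chor _ _ | Chall _ _ | Chex _ _ => True | _ => False end.

Definition csame (c c' : ctx) : Prop := (no_and c <-> no_and c') /\ (no_or c <-> no_or c').

Fixpoint comp (p c : ctx) : ctx :=
  match p with
  | Hole => c
  | CAndL p' B => CAndL (comp p' c) B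
  | CAndR A p' => CAndR A (comp p' c)
  | COrL p' B => COrL (comp p' c) B
  | COrR A p' => COrR A (comp p' c)
  | CForall x p' => CForall x (comp p' c)
  | CExists x p' => CExists x (comp p' c)
  end.

Lemma fill_comp : forall p c G, fill (comp p c) G = fill p (fill c G).
Proof. induction p; simpl; intros; f_equal; auto. Qed.

Lemma csame_comp : forall p c c', csame c c' -> csame (comp p c) (comp p c').
Proof. induction p; simpl; intros c c' H; auto; unfold csame in *; simpl; firstorder. Qed.

Definition indep (c1 : ctx) (G2 : form) (c2 : ctx) (G1 : form) : Prop :=
  exists (K : form -> form -> form) (d1 d2 : form -> ctx),
    (forall Z W, fill (d1 W) Z = K Z W) /\ (forall Z W, fill (d2 Z) W = K Z W) /\
    d1 G2 = c1 /\ d2 G1 = c2 /\ (forall W, csame c1 (d1 W)) /\ (forall Z, csame c2 (d2 Z)).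

Lemma indep_comp : forall p c1 G2 c2 G1, indep c1 G2 c2 G1 -> indep (comp p c1) G2 (comp p c2) G1.
Proof.
  intros p c1 G2 c2 G1 [K [d1 [d2 [H1 [H2 [H3 [H4 [H5 H6]]]]]]]].
  exists (fun Z W => fill p (K Z W)), (fun W => comp p (d1 W)), (fun Z => comp p (d2 Z)).
  split; [intros; rewrite fill_comp, H1; auto|].
  split; [intros; rewrite fill_comp, H2; auto|].
  split; [subst; auto|]. split; [subst; auto|].
  split; intros; apply csame_comp; auto.
Qed.

Lemma csame_refl1 : forall c, csame c c. Proof. unfold csame; tauto. Qed.

Ltac divcase c1 c2 mk1 mk2 mkK :=
  right; exists mkK, mk1, mk2; repeat split; intros; simpl; try reflexivity; try tauto.

Lemma two_ctx : forall c1 G1 c2 G2, fill c1 G1 = fill c2 G2 -> chead G1 -> chead G2 ->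
  (c1 = c2 /\ G1 = G2) \/ indep c1 G2 c2 G1.
Proof.
  induction c1; intros G1 c2 G2 Heq Hc1 Hc2; destruct c2; simpl in Heq;
    try discriminate; try (subst; simpl in *; tauto).
  - injection Heq; intros; subst.
    destruct (IHc1 _ _ _ H0 Hc1 Hc2) as [[]|Hi]; [left; subst; auto|].
    right. apply (indep_comp (CAndL Hole B0)) in Hi. exact Hi.
  - injection Heq; intros; subst.
    right; exists (fun Z W => And (fill c1 Z) (fill c2 W)), (fun W => CAndL c1 (fill c2 W)),
      (fun Z => CAndR (fill c1 Z) c2); repeat split; intros; simpl; tauto.
  - injection Heq; intros; subst.
    right; exists (fun Z W => And (fill c2 W) (fill c1 Z)), (fun W => CAndR (fill c2 W) c1),
      (fun Z => CAndL c2 (fill c1 Z)); repeat split; intros; simpl; tauto.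
  - injection Heq; intros; subst.
    destruct (IHc1 _ _ _ H Hc1 Hc2) as [[]|Hi]; [left; subst; auto|].
    right. apply (indep_comp (CAndR A0 Hole)) in Hi. exact Hi.
  - injection Heq; intros; subst.
    destruct (IHc1 _ _ _ H0 Hc1 Hc2) as [[]|Hi]; [left; subst; auto|].
    right. apply (indep_comp (COrL Hole B0)) in Hi. exact Hi.
  - injection Heq; intros; subst.
    right; exists (fun Z W => Or (fill c1 Z) (fill c2 W)), (fun W => COrL c1 (fill c2 W)),
      (fun Z => COrR (fill c1 Z) c2); repeat split; intros; simpl; tauto.
  - injection Heq; intros; subst.
    right; exists (fun Z W => Or (fill c2 W) (fill c1 Z)), (fun W => COrR (fill c2 W) c1),
      (fun Z => COrL c2 (fill c1 Z)); repeat split; intros; simpl; tauto.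
  - injection Heq; intros; subst.
    destruct (IHc1 _ _ _ H Hc1 Hc2) as [[]|Hi]; [left; subst; auto|].
    right. apply (indep_comp (COrR A0 Hole)) in Hi. exact Hi.
  - injection Heq; intros; subst.
    destruct (IHc1 _ _ _ H Hc1 Hc2) as [[]|Hi]; [left; subst; auto|].
    right. apply (indep_comp (CForall x0 Hole)) in Hi. exact Hi.
  - injection Heq; intros; subst.
    destruct (IHc1 _ _ _ H Hc1 Hc2) as [[]|Hi]; [left; subst; auto|].
    right. apply (indep_comp (CExists x0 Hole)) in Hi. exact Hi.
Qed.

Inductive loc : Type :=
| LS (Gs : list form) (c : ctx)
| LA (Gs Ks : list form) (F : form) (c : ctx).

Definition plug (L : loc) (G : form) : sequent :=
  match L with
  | LS Gs c => (Gs, fill c G)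
  | LA Gs Ks F c => (Gs ++ fill c G :: Ks, F)
  end.

Definition lkind (L : loc) : bool := match L with LS _ _ => true | LA _ _ _ _ => false end.
Definition good (L : loc) : Prop := match L with LS _ c => no_and c | LA _ _ _ c => no_or c end.
Definition lsame (L L' : loc) : Prop := lkind L = lkind L' /\ (good L <-> good L').

Definition lindep (L1 : loc) (G2 : form) (L2 : loc) (G1 : form) : Prop :=
  exists (Q : form -> form -> sequent) (M1 M2 : form -> loc),
    (forall Z W, plug (M1 W) Z = Q Z W) /\ (forall Z W, plug (M2 Z) W = Q Z W) /\
    M1 G2 = L1 /\ M2 G1 = L2 /\ (forall W, lsame L1 (M1 W)) /\ (forall Z, lsame L2 (M2 Z)).

Lemma list_split : forall (l1 l2 k1 k2 : list form) a b, l1 ++ a :: k1 = l2 ++ b :: k2 ->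
  (l1 = l2 /\ a = b /\ k1 = k2) \/ (exists m, l2 = l1 ++ a :: m /\ k1 = m ++ b :: k2) \/
  (exists m, l1 = l2 ++ b :: m /\ k2 = m ++ a :: k1).
Proof.
  induction l1; intros l2 k1 k2 a0 b H; destruct l2; simpl in H; injection H; intros; subst.
  - left; auto.
  - right; left; exists l2; auto.
  - right; right; exists l1; auto.
  - destruct (IHl1 _ _ _ _ _ H0) as [[? []]|[[m []]|[m []]]]; subst.
    + left; auto.
    + right; left; exists m; auto.
    + right; right; exists m; auto.
Qed.

Lemma two_loc : forall L1 G1 L2 G2, plug L1 G1 = plug L2 G2 -> chead G1 -> chead G2 ->
  (L1 = L2 /\ G1 = G2) \/ lindep L1 G2 L2 G1.
Proof.
  intros L1 G1 L2 G2 Heq Hc1 Hc2; destruct L1 as [Gs1 c1|Gs1 Ks1 F1 c1];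
    destruct L2 as [Gs2 c2|Gs2 Ks2 F2 c2]; simpl in Heq; injection Heq; intros; subst.
  - destruct (two_ctx _ _ _ _ H Hc1 Hc2) as [[]|[K [d1 [d2 [H1 [H2 [H3 [H4 [H5 H6]]]]]]]]];
      [left; subst; auto|right].
    exists (fun Z W => (Gs2, K Z W)), (fun W => LS Gs2 (d1 W)), (fun Z => LS Gs2 (d2 Z)).
    simpl; repeat split; intros; try (rewrite H1 || rewrite H2); subst; auto;
      try (unfold csame in *; simpl in *; firstorder).
  - right. exists (fun Z W => (Gs2 ++ fill c2 W :: Ks2, fill c1 Z)),
      (fun W => LS (Gs2 ++ fill c2 W :: Ks2) c1), (fun Z => LA Gs2 Ks2 (fill c1 Z) c2).
    simpl; repeat split; intros; auto.
  - right. exists (fun Z W => (Gs1 ++ fill c1 Z :: Ks1, fill c2 W)),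
      (fun W => LA Gs1 Ks1 (fill c2 W) c1), (fun Z => LS (Gs1 ++ fill c1 Z :: Ks1) c2).
    simpl; repeat split; intros; auto.
  - destruct (list_split _ _ _ _ _ _ H0) as [[? []]|[[m []]|[m []]]]; subst.
    + destruct (two_ctx _ _ _ _ H1 Hc1 Hc2) as [[]|[K [d1 [d2 [H1' [H2 [H3 [H4 [H5 H6]]]]]]]]];
        [left; subst; auto|right].
      exists (fun Z W => (Gs2 ++ K Z W :: Ks2, F2)), (fun W => LA Gs2 Ks2 F2 (d1 W)),
        (fun Z => LA Gs2 Ks2 F2 (d2 Z)).
      simpl; repeat split; intros; try (rewrite H1' || rewrite H2); subst; auto;
        try (unfold csame in *; simpl in *; firstorder).
    + right. exists (fun Z W => (Gs1 ++ fill c1 Z :: m ++ fill c2 W :: Ks2, F2)),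
        (fun W => LA Gs1 (m ++ fill c2 W :: Ks2) F2 c1), (fun Z => LA (Gs1 ++ fill c1 Z :: m) Ks2 F2 c2).
      simpl; repeat split; intros; auto. rewrite <- app_assoc; reflexivity.
    + right. exists (fun Z W => (Gs2 ++ fill c2 W :: m ++ fill c1 Z :: Ks1, F2)),
        (fun W => LA (Gs2 ++ fill c2 W :: m) Ks1 F2 c1), (fun Z => LA Gs2 (m ++ fill c1 Z :: Ks1) F2 c2).
      simpl; repeat split; intros; auto. rewrite <- app_assoc; reflexivity.
Qed.

Lemma fill_free_mono : forall (P : nat -> Prop) A B,
  (forall v, In v (free_vars B) -> In v (free_vars A) \/ P v) ->
  forall c v, In v (free_vars (fill c B)) -> In v (free_vars (fill c A)) \/ P v.
Proof.
  intros P A B HAB c; induction c; simpl; intros v H; auto;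
  try (rewrite in_app_iff in *; destruct H as [H|H]; first [destruct (IHc _ H); tauto | tauto]).
  all: rewrite filter_In in *; destruct H as [H1 H2]; destruct (IHc _ H1); auto.
Qed.

Lemma fill_bound_mono : forall A B,
  (forall v, In v (bound_vars B) -> In v (bound_vars A)) ->
  forall c v, In v (bound_vars (fill c B)) -> In v (bound_vars (fill c A)).
Proof.
  intros A B HAB c; induction c; simpl; intros v H; auto;
  try (rewrite in_app_iff in *; destruct H as [H|H]; auto).
  all: destruct H; auto.
Qed.

Lemma fill_vars_mono : forall (P : nat -> Prop) A B,
  (forall v, In v (vars B) -> In v (vars A) \/ P v) ->
  forall c v, In v (vars (fill c B)) -> In v (vars (fill c A)) \/ P v.
Proof.
  intros P A B HAB c; induction c; simpl; intros v H; auto;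
  try (rewrite in_app_iff in *; destruct H as [H|H]; first [destruct (IHc _ H); tauto | tauto]).
  all: destruct H as [H|H]; auto; destruct (IHc _ H); auto.
Qed.

Lemma plug_mono : forall (f : form -> list nat) (P : nat -> Prop) A B,
  (forall c v, In v (f (fill c B)) -> In v (f (fill c A)) \/ P v) ->
  forall L v, (exists F, In F (seq_forms (plug L B)) /\ In v (f F)) ->
    (exists F, In F (seq_forms (plug L A)) /\ In v (f F)) \/ P v.
Proof.
  intros f P A B Hf L v [F [HF Hv]]; destruct L as [Gs c|Gs Ks F0 c]; simpl in *.
  - destruct HF as [<-|HF].
    + destruct (Hf _ _ Hv); auto. left; exists (fill c A); simpl; auto.
    + left; exists F; simpl; auto.
  - destruct HF as [<-|HF]; [left; exists F0; simpl; auto|].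
    rewrite in_app_iff in HF; destruct HF as [HF|[<-|HF]].
    + left; exists F; split; auto; right; apply in_app_iff; auto.
    + destruct (Hf _ _ Hv); auto. left; exists (fill c A); split; auto; right; apply in_app_iff; simpl; auto.
    + left; exists F; split; auto; right; apply in_app_iff; simpl; auto.
Qed.

Lemma free_plug : forall (P : nat -> Prop) A B,
  (forall v, In v (free_vars B) -> In v (free_vars A) \/ P v) ->
  forall L v, free_in_seq v (plug L B) -> free_in_seq v (plug L A) \/ P v.
Proof. intros. apply (plug_mono free_vars P A B); auto. apply fill_free_mono; auto. Qed.

Lemma bound_plug : forall A B,
  (forall v, In v (bound_vars B) -> In v (bound_vars A)) ->
  forall L v, bound_in_seq v (plug L B) -> bound_in_seq v (plug L A).
Proof.
  intros. destruct (plug_mono bound_vars (fun _ => False) A B) with (L := L) (v := v); auto.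
  intros; left; eapply fill_bound_mono; eauto. destruct H1.
Qed.

Lemma vars_plug : forall (P : nat -> Prop) A B,
  (forall v, In v (vars B) -> In v (vars A) \/ P v) ->
  forall L v, occurs_seq v (plug L B) -> occurs_seq v (plug L A) \/ P v.
Proof. intros. apply (plug_mono vars P A B); auto. apply fill_vars_mono; auto. Qed.

Definition shrinks (A B : form) (z : nat) : Prop :=
  (forall v, In v (free_vars B) -> In v (free_vars A) \/ v = z) /\
  (forall v, In v (bound_vars B) -> In v (bound_vars A)) /\
  (forall v, In v (vars B) -> In v (vars A) \/ v = z).

Lemma proper_shrinks : forall L A B z, proper_seq (plug L A) -> shrinks A B z ->
  ~ bound_in_seq z (plug L A) -> proper_seq (plug L B).
Proof.
  intros L A B z Hp [H1 [H2 H3]] Hz y Hf Hb.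
  apply (bound_plug A B H2) in Hb.
  destruct (free_plug _ A B H1 L y Hf) as [Hf'|<-]; [apply (Hp y); auto | auto].
Qed.

Lemma shrinks_split : forall H0 H1 z, shrinks (Chand H0 H1) H0 z /\ shrinks (Chand H0 H1) H1 z /\
  shrinks (Chor H0 H1) H0 z /\ shrinks (Chor H0 H1) H1 z.
Proof. intros; unfold shrinks; simpl; repeat split; intros; rewrite in_app_iff; auto. Qed.

Lemma shrinks_q : forall x H z, shrinks (Chall x H) (subst x (Var z) H) z /\
  shrinks (Chex x H) (subst x (Var z) H) z.
Proof.
  intros; unfold shrinks; simpl; rewrite bound_subst.
  assert (forall v, In v (free_vars (subst x (Var z) H)) ->
     In v (filter (fun v0 => negb (v0 =? x)) (free_vars H)) \/ v = z).
  { intros v Hv. destruct (free_subst _ _ _ _ Hv) as [[]|[<-|[]]]; auto.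
    left; apply filter_In; split; auto. destruct (Nat.eqb_spec v x); auto. }
  assert (forall v, In v (vars (subst x (Var z) H)) -> (x = v \/ In v (vars H)) \/ v = z).
  { intros v Hv. destruct (vars_subst _ _ _ _ Hv) as [|[<-|[]]]; auto. }
  repeat split; auto.
Qed.

Definition cnt_seq (S : sequent) : nat := cnt (snd S) + list_sum (map cnt (fst S)).

Lemma cnt_fill_lt : forall c A B, cnt A < cnt B -> cnt (fill c A) < cnt (fill c B).
Proof. induction c; simpl; intros; auto; specialize (IHc _ _ H); lia. Qed.

Lemma cnt_plug_lt : forall L A B, cnt A < cnt B -> cnt_seq (plug L A) < cnt_seq (plug L B).
Proof.
  intros L A B H; destruct L; unfold cnt_seq; simpl.
  - pose proof (cnt_fill_lt c _ _ H); lia.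
  - rewrite !map_app, !list_sum_app; simpl. pose proof (cnt_fill_lt c _ _ H); lia.
Qed.

Definition hd_split (L : loc) (A B : form) : form :=
  match L with LS _ _ => Chand A B | LA _ _ _ _ => Chor A B end.
Definition hd_q (L : loc) (x : nat) (H : form) : form :=
  match L with LS _ _ => Chall x H | LA _ _ _ _ => Chex x H end.
Definition hd_csplit (L : loc) (A B : form) : form :=
  match L with LS _ _ => Chor A B | LA _ _ _ _ => Chand A B end.
Definition hd_cq (L : loc) (x : nat) (H : form) : form :=
  match L with LS _ _ => Chex x H | LA _ _ _ _ => Chall x H end.

Definition choose_at (L : loc) (G G' : form) (P : sequent) : Prop :=
  (exists A B (i : bool), G = hd_csplit L A B /\ G' = (if i then B else A)) \/
  (exists x H t, G = hd_cq L x H /\ G' = subst x t H /\ ok_choice_term t P).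

Definition gen_wait (Pr : sequent -> Prop) (X : sequent) : Prop :=
  (forall L A B, X = plug L (hd_split L A B) -> Pr (plug L A) /\ Pr (plug L B)) /\
  (forall L x H, X = plug L (hd_q L x H) ->
     exists y, ~ occurs_seq y X /\ Pr (plug L (subst x (Var y) H))) /\
  stable X.

Definition gen_follows (Pr : sequent -> Prop) (X : sequent) : Prop :=
  (exists L G G', X = plug L G /\ choose_at L G G' (plug L G') /\ Pr (plug L G')) \/
  (exists Gs E Ks F, X = (Gs ++ E :: Ks, F) /\ Pr (Gs ++ E :: Ks ++ [E], F)) \/
  gen_wait Pr X.

Lemma gen_follows_mono : forall (P Q : sequent -> Prop) X, (forall S, P S -> Q S) ->
  gen_follows P X -> gen_follows Q X.
Proof.
  intros P Q X HPQ [[L [G [G' [H1 [H2 H3]]]]]|[[Gs [E [Ks [F [H1 H2]]]]]|[W1 [W2 W3]]]].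
  - left; exists L, G, G'; auto.
  - right; left; exists Gs, E, Ks, F; auto.
  - right; right; split; [|split]; auto.
    + intros L A B HX; destruct (W1 _ _ _ HX); auto.
    + intros L x H HX; destruct (W2 _ _ _ HX) as [y []]; exists y; auto.
Qed.

Lemma follows_gen : forall l X, follows l X <-> gen_follows (fun S => In S l) X.
Proof.
  intros l X; split.
  - intros [[Gs [c [H0 [H1 [i [-> HI]]]]]]|[[Gs [c [H0 [H1 [Ks [F [i [-> HI]]]]]]]]|
           [[Gs [c [x [H [t [-> [Ht HI]]]]]]]|[[Gs [c [x [H [Ks [F [t [-> [Ht HI]]]]]]]]]|
           [[Gs [E [Ks [F [-> HI]]]]]|[W1 [W2 [W3 [W4 W5]]]]]]]]].
    + left; exists (LS Gs c), (Chor H0 H1), (if i then H1 else H0); split; auto; split; auto.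
      left; exists H0, H1, i; auto.
    + left; exists (LA Gs Ks F c), (Chand H0 H1), (if i then H1 else H0); split; auto; split; auto.
      left; exists H0, H1, i; auto.
    + left; exists (LS Gs c), (Chex x H), (subst x t H); split; auto; split; auto.
      right; exists x, H, t; auto.
    + left; exists (LA Gs Ks F c), (Chall x H), (subst x t H); split; auto; split; auto.
      right; exists x, H, t; auto.
    + right; left; exists Gs, E, Ks, F; auto.
    + right; right; split; [|split]; auto.
      * intros [Gs c|Gs Ks F c] A B HX; simpl in HX; [apply (W1 Gs c)|apply (W2 Gs c A B Ks F)]; auto.
      * intros [Gs c|Gs Ks F c] x H HX; simpl in HX; [apply (W3 Gs c)|apply (W4 Gs c x H Ks F)]; auto.
  - intros [[L [G [G' [-> [Hc HI]]]]]|[[Gs [E [Ks [F [-> HI]]]]]|[W1 [W2 W3]]]].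
    + destruct Hc as [[A [B [i [-> ->]]]]|[x [H [t [-> [-> Ht]]]]]]; destruct L as [Gs c|Gs Ks F c].
      * left; exists Gs, c, A, B, i; auto.
      * right; left; exists Gs, c, A, B, Ks, F, i; auto.
      * right; right; left; exists Gs, c, x, H, t; auto.
      * right; right; right; left; exists Gs, c, x, H, Ks, F, t; auto.
    + right; right; right; right; left; exists Gs, E, Ks, F; auto.
    + right; right; right; right; right.
      split; [|split; [|split; [|split]]]; auto.
      * intros Gs c H0 H1 HX; apply (W1 (LS Gs c)); auto.
      * intros Gs c H0 H1 Ks F HX; apply (W1 (LA Gs Ks F c)); auto.
      * intros Gs c x H HX; apply (W2 (LS Gs c)); auto.
      * intros Gs c x H Ks F HX; apply (W2 (LA Gs Ks F c)); auto.
Qed.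

Lemma follows_mono : forall l l' X, follows l X -> (forall S, In S l -> In S l') -> follows l' X.
Proof. intros. apply follows_gen. apply follows_gen in H. apply gen_follows_mono with (P := fun S => In S l); auto. Qed.

Lemma proof_app : forall l1 l2, is_proof l1 -> is_proof l2 -> is_proof (l1 ++ l2).
Proof.
  intros l1 l2 H1 H2 i Hi. rewrite length_app in Hi.
  destruct (Nat.lt_ge_cases i (length l1)).
  - rewrite app_nth1 by auto. rewrite firstn_app.
    replace (i - length l1) with 0 by lia. rewrite firstn_0, app_nil_r. apply H1; auto.
  - rewrite app_nth2 by auto. rewrite firstn_app.
    rewrite firstn_all2 by lia.
    destruct (H2 (i - length l1)) as [Hp Hf]; [lia|]. split; auto.
    eapply follows_mono; eauto. intros; apply in_app_iff; auto.
Qed.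

Lemma proof_snoc : forall l X, is_proof l -> proper_seq X -> follows l X -> is_proof (l ++ [X]).
Proof.
  intros l X Hl Hp Hf i Hi. rewrite length_app in Hi; simpl in Hi.
  destruct (Nat.lt_ge_cases i (length l)).
  - rewrite app_nth1 by auto. rewrite firstn_app.
    replace (i - length l) with 0 by lia. rewrite firstn_0, app_nil_r. apply Hl; auto.
  - replace i with (length l) by lia. rewrite app_nth2 by lia. rewrite Nat.sub_diag. simpl.
    rewrite firstn_app, firstn_all, Nat.sub_diag, firstn_0, app_nil_r. auto.
Qed.

Lemma provable_in : forall X, provable X -> exists l, is_proof l /\ In X l.
Proof.
  intros X [l [Hl [Hne Hlast]]]; exists l; split; auto.
  destruct (exists_last Hne) as [l' [a ->]]. rewrite last_last in Hlast; subst.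
  apply in_app_iff; simpl; auto.
Qed.

Lemma collect_proofs : forall Ls, (forall S, In S Ls -> provable S) ->
  exists l, is_proof l /\ forall S, In S Ls -> In S l.
Proof.
  induction Ls as [|a Ls IH]; intros H.
  - exists []; split; [intros i Hi; simpl in Hi; lia| intros _ []].
  - destruct IH as [l [Hl Hin]]; [intros; apply H; simpl; auto|].
    destruct (provable_in a) as [la [Hla Ha]]; [apply H; simpl; auto|].
    exists (la ++ l); split; [apply proof_app; auto|].
    intros S [<-|HS]; apply in_app_iff; auto.
Qed.

Fixpoint dec (F : form) : list (ctx * form) :=
  (Hole, F) :: match F with
  | And A B => map (fun p => (CAndL (fst p) B, snd p)) (dec A) ++ map (fun p => (CAndR A (fst p), snd p)) (dec B)
  | Or A B => map (fun p => (COrL (fst p) B, snd p)) (dec A) ++ map (fun p => (COrR A (fst p), snd p)) (dec B)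
  | Forall x A => map (fun p => (CForall x (fst p), snd p)) (dec A)
  | Exists x A => map (fun p => (CExists x (fst p), snd p)) (dec A)
  | _ => []
  end.

Lemma dec_complete : forall c G, In (c, G) (dec (fill c G)).
Proof.
  induction c; intros G; [destruct G; simpl; auto|..]; simpl fill; simpl dec; apply in_cons; try apply in_app_iff;
  first [solve [left; apply in_map_iff; exists (c, G); auto] | solve [right; apply in_map_iff; exists (c, G); auto]
        | solve [apply in_map_iff; exists (c, G); auto]].
Qed.

Fixpoint splits (l : list form) : list (list form * form * list form) :=
  match l with
  | [] => []
  | a :: l' => ([], a, l') :: map (fun t => (a :: fst (fst t), snd (fst t), snd t)) (splits l')
  end.

Lemma splits_complete : forall Gs A Ks, In (Gs, A, Ks) (splits (Gs ++ A :: Ks)).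
Proof.
  induction Gs; intros; simpl; auto. right. apply in_map_iff. exists (Gs, A, Ks); auto.
Qed.

Definition locs_of (X : sequent) : list (loc * form) :=
  map (fun p => (LS (fst X) (fst p), snd p)) (dec (snd X)) ++
  flat_map (fun t => map (fun p => (LA (fst (fst t)) (snd t) (snd X) (fst p), snd p)) (dec (snd (fst t))))
    (splits (fst X)).

Lemma locs_complete : forall L G, In (L, G) (locs_of (plug L G)).
Proof.
  intros [Gs c|Gs Ks F c] G; unfold locs_of; simpl; apply in_app_iff.
  - left. apply in_map_iff. exists (c, G); split; auto. apply dec_complete.
  - right. apply in_flat_map. exists (Gs, fill c G, Ks); split; [apply splits_complete|].
    apply in_map_iff. exists (c, G); split; auto. apply dec_complete.
Qed.

Lemma fin_collect : forall (A : Type) (Pr : sequent -> Prop) (Q : A -> (sequent -> Prop) -> Prop),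
  (forall a (P P' : sequent -> Prop), Q a P -> (forall S, P S -> P' S) -> Q a P') ->
  forall l, (forall a, In a l -> exists la, (forall S, In S la -> Pr S) /\ Q a (fun S => In S la)) ->
  exists Ls, (forall S, In S Ls -> Pr S) /\ forall a, In a l -> Q a (fun S => In S Ls).
Proof.
  intros A Pr Q HQ l; induction l as [|a l IH]; intros H.
  - exists []; split; [intros _ []| intros _ []].
  - destruct IH as [Ls [H1 H2]]; [intros; apply H; simpl; auto|].
    destruct (H a) as [la [H3 H4]]; [simpl; auto|].
    exists (la ++ Ls); split.
    + intros S HS; apply in_app_iff in HS; destruct HS; auto.
    + intros b [<-|Hb]; eapply HQ; eauto; intros; apply in_app_iff; auto.
Qed.

Lemma wait_fin : forall (Pr : sequent -> Prop) X, gen_wait Pr X ->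
  exists Ls, (forall S, In S Ls -> Pr S) /\ gen_wait (fun S => In S Ls) X.
Proof.
  intros Pr X [W1 [W2 W3]].
  set (Q := fun (a : loc * form) (P : sequent -> Prop) => X = plug (fst a) (snd a) ->
     (forall A B, snd a = hd_split (fst a) A B -> P (plug (fst a) A) /\ P (plug (fst a) B)) /\
     (forall x H, snd a = hd_q (fst a) x H -> exists y, ~ occurs_seq y X /\ P (plug (fst a) (subst x (Var y) H)))).
  destruct (fin_collect _ Pr Q) with (l := locs_of X) as [Ls [H1 H2]].
  - intros [L G] P P' HQa HPP' HX; destruct (HQa HX) as [Ha Hb]; split.
    + intros A B HG; destruct (Ha A B HG); auto.
    + intros x H HG; destruct (Hb x H HG) as [y []]; exists y; auto.
  - intros [L G] _. destruct (classic (X = plug L G)) as [HX|HX].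
    2: { exists []; split; [intros _ []|]. intros HX'; contradiction. }
    destruct (classic (exists A B, G = hd_split L A B)) as [[A [B HG]]|HG].
    + exists [plug L A; plug L B]; split.
      * intros S [<-|[<-|[]]]; apply (W1 L A B); subst; auto.
      * intros _; simpl; split.
        -- intros A' B' HG'. rewrite HG' in HG. destruct L; simpl in HG; injection HG; intros; subst; auto.
        -- intros x H HG'. rewrite HG' in HG. destruct L; simpl in HG; discriminate.
    + destruct (classic (exists x H, G = hd_q L x H)) as [[x [H HG2]]|HG2].
      * destruct (W2 L x H) as [y [Hy HP]]; [subst; auto|].
        exists [plug L (subst x (Var y) H)]; split.
        -- intros S [<-|[]]; auto.
        -- intros _; simpl; split.
           ++ intros A B HG'; exfalso; apply HG; eauto.
           ++ intros x' H' HG'. rewrite HG' in HG2. destruct L; simpl in HG2; injection HG2; intros; subst;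
              exists y; auto.
      * exists []; split; [intros _ []|]. intros _; split.
        -- intros A B HG'; exfalso; apply HG; eauto.
        -- intros x H HG'; exfalso; apply HG2; eauto.
  - exists Ls; split; auto. split; [|split]; auto.
    + intros L A B HX. apply (H2 (L, hd_split L A B)); auto. rewrite HX; apply locs_complete.
    + intros L x H HX. apply (H2 (L, hd_q L x H)); auto. rewrite HX; apply locs_complete.
Qed.

Lemma gen_fin : forall (Pr : sequent -> Prop) X, gen_follows Pr X ->
  exists Ls, (forall S, In S Ls -> Pr S) /\ gen_follows (fun S => In S Ls) X.
Proof.
  intros Pr X [[L [G [G' [H1 [H2 H3]]]]]|[[Gs [E [Ks [F [H1 H2]]]]]|HW]].
  - exists [plug L G']; split; [intros S [<-|[]]; auto|]. left; exists L, G, G'; simpl; auto.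
  - exists [(Gs ++ E :: Ks ++ [E], F)]; split; [intros S [<-|[]]; auto|].
    right; left; exists Gs, E, Ks, F; simpl; auto.
  - destruct (wait_fin _ _ HW) as [Ls []]; exists Ls; split; auto. right; right; auto.
Qed.

Lemma prov_step : forall X, proper_seq X -> gen_follows provable X -> provable X.
Proof.
  intros X Hp Hf. destruct (gen_fin _ _ Hf) as [Ls [H1 H2]].
  destruct (collect_proofs Ls H1) as [l [Hl Hin]].
  exists (l ++ [X]); split; [|split].
  - apply proof_snoc; auto. apply follows_gen.
    apply gen_follows_mono with (P := fun S => In S Ls); auto.
  - intro H; destruct l; discriminate.
  - apply last_last.
Qed.

Fixpoint D (n : nat) (X : sequent) : Prop :=
  match n with
  | 0 => False
  | S m => proper_seq X /\ gen_follows (D m) X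
  end.

Lemma D_S : forall n X, D n X -> D (S n) X.
Proof.
  induction n; intros X H; [destruct H|]. destruct H as [Hp Hf]. split; auto.
  eapply gen_follows_mono; [|exact Hf]. auto.
Qed.

Lemma D_mono : forall n m X, n <= m -> D n X -> D m X.
Proof. intros n m X Hle; induction Hle; auto. intros; apply D_S; auto. Qed.

Lemma D_proper : forall n X, D n X -> proper_seq X.
Proof. intros [|n] X H; [destruct H| apply H]. Qed.

Lemma D_prov : forall n X, D n X -> provable X.
Proof.
  induction n; intros X H; [destruct H|]. destruct H as [Hp Hf].
  apply prov_step; auto. eapply gen_follows_mono; [|exact Hf]; auto.
Qed.

Lemma proof_D : forall l, is_proof l -> forall i, i < length l -> D (S i) (nth i l ([], Top)).
Proof.
  intros l Hl i; induction i as [i IH] using (well_founded_induction lt_wf); intros Hi.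
  destruct (Hl i Hi) as [Hp Hf]. split; auto.
  apply follows_gen in Hf. eapply gen_follows_mono; [|exact Hf].
  intros S HS. destruct (In_nth _ _ ([], Top) HS) as [j [Hj Hnth]].
  rewrite length_firstn in Hj. rewrite nth_firstn in Hnth.
  destruct (Nat.ltb_spec j i); [|lia]. subst S.
  apply D_mono with (S j); [lia|]. apply IH; lia.
Qed.

Lemma prov_D : forall X, provable X -> exists n, D n X.
Proof.
  intros X Hpr. destruct (provable_in X Hpr) as [l [Hl HX]].
  destruct (In_nth _ _ ([], Top) HX) as [i [Hi <-]]. exists (S i). apply proof_D; auto.
Qed.

Fixpoint sub_ctx (y : nat) (s : term) (c : ctx) : ctx :=
  match c with
  | Hole => Hole
  | CAndL c B => CAndL (sub_ctx y s c) (subst y s B)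
  | CAndR A c => CAndR (subst y s A) (sub_ctx y s c)
  | COrL c B => COrL (sub_ctx y s c) (subst y s B)
  | COrR A c => COrR (subst y s A) (sub_ctx y s c)
  | CForall x c => CForall x (sub_ctx y s c)
  | CExists x c => CExists x (sub_ctx y s c)
  end.

Definition sub_loc (y : nat) (s : term) (L : loc) : loc :=
  match L with
  | LS Gs c => LS (map (subst y s) Gs) (sub_ctx y s c)
  | LA Gs Ks F c => LA (map (subst y s) Gs) (map (subst y s) Ks) (subst y s F) (sub_ctx y s c)
  end.

Definition sub_seq (y z : nat) (S : sequent) : sequent :=
  (map (subst y (Var z)) (fst S), subst y (Var z) (snd S)).

Lemma sub_fill : forall y s c G, ~ In y (bound_vars (fill c G)) ->
  subst y s (fill c G) = fill (sub_ctx y s c) (subst y s G).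
Proof.
  induction c; simpl; intros G H; try rewrite in_app_iff in H; auto;
  try (rewrite IHc by tauto; reflexivity).
  all: destruct (Nat.eqb_spec x y); [subst; tauto|]; rewrite IHc by tauto; reflexivity.
Qed.

Lemma bound_seq_in : forall v S F, In F (seq_forms S) -> In v (bound_vars F) -> bound_in_seq v S.
Proof. intros; exists F; auto. Qed.

Lemma occurs_seq_in : forall v S F, In F (seq_forms S) -> In v (vars F) -> occurs_seq v S.
Proof. intros; exists F; auto. Qed.

Lemma sub_plug : forall y z L G, ~ bound_in_seq y (plug L G) ->
  sub_seq y z (plug L G) = plug (sub_loc y (Var z) L) (subst y (Var z) G).
Proof.
  intros y z [Gs c|Gs Ks F c] G H; unfold sub_seq; simpl.
  - rewrite sub_fill; auto. intro; apply H; eapply bound_seq_in; [|eauto]; simpl; auto.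
  - rewrite map_app; simpl. rewrite sub_fill; auto.
    intro; apply H; eapply bound_seq_in; [|eauto]; simpl; right; apply in_app_iff; simpl; auto.
Qed.

Lemma sub_ctx_fresh : forall y s c G, ~ In y (vars (fill c G)) -> sub_ctx y s c = c.
Proof.
  induction c; simpl; intros G H; try rewrite in_app_iff in H; auto;
  f_equal; try (apply IHc with G; tauto); apply subst_notin; tauto.
Qed.

Lemma map_subst_fresh : forall y s l, (forall F, In F l -> ~ In y (vars F)) -> map (subst y s) l = l.
Proof.
  induction l; simpl; intros; auto. rewrite subst_notin; auto. f_equal; auto.
Qed.

Lemma sub_loc_fresh : forall y s L G, ~ occurs_seq y (plug L G) -> sub_loc y s L = L.
Proof.
  intros y s [Gs c|Gs Ks F c] G H; simpl.
  - rewrite map_subst_fresh, (sub_ctx_fresh y s c G); auto.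
    + intro; apply H; eapply occurs_seq_in; [|eauto]; simpl; auto.
    + intros F HF Hy; apply H; eapply occurs_seq_in; [|eauto]; simpl; auto.
  - assert (HG : forall F', In F' Gs -> ~ In y (vars F')).
    { intros F' HF Hy; apply H; eapply occurs_seq_in; [|eauto]; simpl; right; apply in_app_iff; simpl; auto. }
    assert (HK : forall F', In F' Ks -> ~ In y (vars F')).
    { intros F' HF Hy; apply H; eapply occurs_seq_in; [|eauto]; simpl; right; apply in_app_iff; simpl; auto. }
    assert (HF : ~ In y (vars F)).
    { intro; apply H; eapply occurs_seq_in; [|eauto]; simpl; auto. }
    assert (Hc : ~ In y (vars (fill c G))).
    { intro; apply H; eapply occurs_seq_in; [|eauto]; simpl; right; apply in_app_iff; simpl; auto. }
    rewrite (map_subst_fresh y s Gs HG), (map_subst_fresh y s Ks HK), (subst_notin y s F HF),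
      (sub_ctx_fresh y s c G Hc); auto.
Qed.

Lemma pull_fill : forall y s c' G' F, subst y s F = fill c' G' -> chead G' -> ~ In y (bound_vars F) ->
  exists c G, F = fill c G /\ c' = sub_ctx y s c /\ G' = subst y s G.
Proof.
  induction c'; intros G' F Heq Hc Hb.
  - exists Hole, F; simpl in *; auto.
  - destruct F; simpl in Heq; try (destruct (Nat.eqb _ _)); try discriminate.
    injection Heq; intros; subst. simpl in Hb; rewrite in_app_iff in Hb.
    destruct (IHc' _ _ H0 Hc) as [c [G [-> [-> ->]]]]; [tauto|].
    exists (CAndL c F2), G; auto.
  - destruct F; simpl in Heq; try (destruct (Nat.eqb _ _)); try discriminate.
    injection Heq; intros; subst. simpl in Hb; rewrite in_app_iff in Hb.
    destruct (IHc' _ _ H Hc) as [c [G [-> [-> ->]]]]; [tauto|].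
    exists (CAndR F1 c), G; auto.
  - destruct F; simpl in Heq; try (destruct (Nat.eqb _ _)); try discriminate.
    injection Heq; intros; subst. simpl in Hb; rewrite in_app_iff in Hb.
    destruct (IHc' _ _ H0 Hc) as [c [G [-> [-> ->]]]]; [tauto|].
    exists (COrL c F2), G; auto.
  - destruct F; simpl in Heq; try (destruct (Nat.eqb _ _)); try discriminate.
    injection Heq; intros; subst. simpl in Hb; rewrite in_app_iff in Hb.
    destruct (IHc' _ _ H Hc) as [c [G [-> [-> ->]]]]; [tauto|].
    exists (COrR F1 c), G; auto.
  - destruct F; simpl in Heq; try discriminate;
    try (destruct (Nat.eqb_spec x0 y); discriminate).
    simpl in Hb. destruct (Nat.eqb_spec x0 y); [subst; tauto|].
    injection Heq; intros; subst.
    destruct (IHc' _ _ H Hc) as [c [G [-> [-> ->]]]]; [tauto|].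
    exists (CForall x c), G; auto.
  - destruct F; simpl in Heq; try discriminate;
    try (destruct (Nat.eqb_spec x0 y); discriminate).
    simpl in Hb. destruct (Nat.eqb_spec x0 y); [subst; tauto|].
    injection Heq; intros; subst.
    destruct (IHc' _ _ H Hc) as [c [G [-> [-> ->]]]]; [tauto|].
    exists (CExists x c), G; auto.
Qed.

Lemma pull_plug : forall y z L' G' X, sub_seq y z X = plug L' G' -> chead G' -> ~ bound_in_seq y X ->
  exists L G, X = plug L G /\ L' = sub_loc y (Var z) L /\ G' = subst y (Var z) G.
Proof.
  intros y z L' G' [Gs F] Heq Hc Hb; unfold sub_seq in Heq; simpl in Heq.
  destruct L' as [Gs' c'|Gs' Ks' F' c']; simpl in Heq; injection Heq; intros; subst.
  - destruct (pull_fill _ _ _ _ _ H Hc) as [c [G [-> [-> ->]]]].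
    + intro; apply Hb; eapply bound_seq_in; [|eauto]; simpl; auto.
    + exists (LS Gs c), G; auto.
  - destruct (map_eq_app _ _ _ _ H0) as [l1 [l2 [-> [H1 H2]]]].
    destruct (map_eq_cons _ _ H2) as [a [tl [-> [H3 H4]]]].
    destruct (pull_fill _ _ _ _ _ H3 Hc) as [c [G [-> [-> ->]]]].
    + intro; apply Hb; eapply bound_seq_in; [|eauto]; simpl; right; apply in_app_iff; simpl; auto.
    + exists (LA l1 tl F c), G; subst; auto.
Qed.

Lemma lkind_sub : forall y s L, lkind (sub_loc y s L) = lkind L.
Proof. intros y s []; reflexivity. Qed.

Lemma sub_hd_split : forall y s L G A B, subst y s G = hd_split (sub_loc y s L) A B ->
  exists H0 H1, G = hd_split L H0 H1 /\ A = subst y s H0 /\ B = subst y s H1.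
Proof.
  intros y s [] G A B H; destruct G; simpl in H; try (destruct (Nat.eqb _ _)); try discriminate;
  injection H; intros; subst; eexists _, _; simpl; eauto.
Qed.

Lemma sub_hd_q : forall y s L G x H', subst y s G = hd_q (sub_loc y s L) x H' ->
  ~ In y (bound_vars G) -> exists H, G = hd_q L x H /\ H' = subst y s H.
Proof.
  intros y s [] G x H' H Hb; destruct G; simpl in H; try discriminate;
  try (destruct (Nat.eqb_spec x0 y); discriminate);
  simpl in Hb; destruct (Nat.eqb_spec x0 y); try (subst; tauto);
  injection H; intros; subst; eexists; simpl; eauto.
Qed.

Lemma seq_forms_sub : forall y z S, seq_forms (sub_seq y z S) = map (subst y (Var z)) (seq_forms S).
Proof. reflexivity. Qed.

Lemma bound_sub_seq : forall y z S v, bound_in_seq v (sub_seq y z S) -> bound_in_seq v S.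
Proof.
  intros y z S v [F [HF Hv]]. rewrite seq_forms_sub in HF. apply in_map_iff in HF.
  destruct HF as [F0 [<- HF0]]. rewrite bound_subst in Hv. exists F0; auto.
Qed.

Lemma bound_sub_seq2 : forall y z S v, bound_in_seq v S -> bound_in_seq v (sub_seq y z S).
Proof.
  intros y z S v [F [HF Hv]]. exists (subst y (Var z) F). rewrite seq_forms_sub, bound_subst.
  split; auto. apply in_map; auto.
Qed.

Lemma free_sub_seq : forall y z S v, free_in_seq v (sub_seq y z S) -> free_in_seq v S \/ v = z.
Proof.
  intros y z S v [F [HF Hv]]. rewrite seq_forms_sub in HF. apply in_map_iff in HF.
  destruct HF as [F0 [<- HF0]]. destruct (free_subst _ _ _ _ Hv) as [[]|[<-|[]]]; auto.
  left; exists F0; auto.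
Qed.

Lemma occurs_sub_seq : forall y z S v, occurs_seq v (sub_seq y z S) -> occurs_seq v S \/ v = z.
Proof.
  intros y z S v [F [HF Hv]]. rewrite seq_forms_sub in HF. apply in_map_iff in HF.
  destruct HF as [F0 [<- HF0]]. destruct (vars_subst _ _ _ _ Hv) as [|[<-|[]]]; auto.
  left; exists F0; auto.
Qed.

Lemma proper_sub : forall y z S, proper_seq S -> ~ bound_in_seq z S -> proper_seq (sub_seq y z S).
Proof.
  intros y z S Hp Hz v Hf Hb. apply bound_sub_seq in Hb.
  destruct (free_sub_seq _ _ _ _ Hf) as [Hf'|<-]; [apply (Hp v); auto|auto].
Qed.

Lemma valid_subst : forall y z F, valid F -> ~ In z (bound_vars F) -> valid (subst y (Var z) F).
Proof. intros y z F HF Hz M e. apply sat_subst; auto. Qed.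

Lemma elem_seq_sub : forall y z S, elem_seq (sub_seq y z S) = subst y (Var z) (elem_seq S).
Proof.
  intros y z [Gs F]. unfold elem_seq, sub_seq; simpl. rewrite map_map.
  rewrite (map_ext (fun x => elem (subst y (Var z) x)) (fun x => subst y (Var z) (elem x)))
    by (intros; apply elem_subst).
  rewrite <- map_map, big_and_subst, neg_subst, elem_subst. reflexivity.
Qed.

Lemma stable_sub : forall y z S, stable S -> ~ bound_in_seq z S -> stable (sub_seq y z S).
Proof.
  intros y z [Gs F] Hs Hz. unfold stable. rewrite elem_seq_sub. apply valid_subst; auto.
  unfold elem_seq; simpl; rewrite in_app_iff, bound_neg. intros [H|H].
  - destruct (bound_big_and _ _ H) as [F' [HF' Hv]]. apply in_map_iff in HF'.
    destruct HF' as [F0 [<- HF0]]. apply Hz. exists F0; split; [simpl; auto|]. apply bound_elem; auto.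
  - apply Hz. exists F; split; [simpl; auto|]. apply bound_elem; auto.
Qed.

Lemma bound_fill : forall c G v, In v (bound_vars G) -> In v (bound_vars (fill c G)).
Proof. induction c; simpl; intros; auto; rewrite ?in_app_iff; auto. Qed.

Lemma vars_fill : forall c G v, In v (vars G) -> In v (vars (fill c G)).
Proof. induction c; simpl; intros; auto; rewrite ?in_app_iff; auto. Qed.

Lemma bound_in_plug : forall L G v, In v (bound_vars G) -> bound_in_seq v (plug L G).
Proof.
  intros [Gs c|Gs Ks F c] G v H; unfold bound_in_seq.
  - exists (fill c G); split; [simpl; auto| apply bound_fill; auto].
  - exists (fill c G); split; [simpl; right; apply in_app_iff; simpl; auto| apply bound_fill; auto].
Qed.

Lemma vars_in_plug : forall L G v, In v (vars G) -> occurs_seq v (plug L G).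
Proof.
  intros [Gs c|Gs Ks F c] G v H; unfold occurs_seq.
  - exists (fill c G); split; [simpl; auto| apply vars_fill; auto].
  - exists (fill c G); split; [simpl; right; apply in_app_iff; simpl; auto| apply vars_fill; auto].
Qed.

Lemma bound_vars_in : forall F v, In v (bound_vars F) -> In v (vars F).
Proof. induction F; simpl; intros; auto; try contradiction; rewrite ?in_app_iff in *; firstorder. Qed.

Lemma bound_occurs : forall S v, bound_in_seq v S -> occurs_seq v S.
Proof. intros S v [F [HF Hv]]; exists F; split; auto; apply bound_vars_in; auto. Qed.

Lemma in_le_max : forall l x, In x l -> x <= list_max l.
Proof. induction l; simpl; intros x H; [destruct H|]. destruct H as [<-|H]; [lia|]. specialize (IHl _ H); lia. Qed.

Lemma fresh_list : forall l : list nat, exists y, ~ In y l.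
Proof. intros l. exists (S (list_max l)). intro H. apply in_le_max in H. lia. Qed.

Lemma fresh_seq : forall S (extra : list nat), exists y, ~ occurs_seq y S /\ ~ In y extra.
Proof.
  intros S extra. destruct (fresh_list (extra ++ flat_map vars (seq_forms S))) as [y Hy].
  exists y; split.
  - intros [F [HF Hv]]; apply Hy; apply in_app_iff; right; apply in_flat_map; eauto.
  - intro; apply Hy; apply in_app_iff; auto.
Qed.

Lemma hd_q_bound : forall L x H, In x (bound_vars (hd_q L x H)) /\
  (forall v, In v (bound_vars H) -> In v (bound_vars (hd_q L x H))) /\
  (forall v, In v (vars H) -> In v (vars (hd_q L x H))).
Proof. intros [] x H; simpl; auto. Qed.

Lemma hd_cq_bound : forall L x H, In x (bound_vars (hd_cq L x H)) /\
  (forall v, In v (bound_vars H) -> In v (bound_vars (hd_cq L x H))).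
Proof. intros [] x H; simpl; auto. Qed.

Lemma hd_split_bound : forall L A B v, (In v (bound_vars A) \/ In v (bound_vars B)) ->
  In v (bound_vars (hd_split L A B)).
Proof. intros [] A B v H; simpl; apply in_app_iff; auto. Qed.

Lemma hd_csplit_bound : forall L A B v, (In v (bound_vars A) \/ In v (bound_vars B)) ->
  In v (bound_vars (hd_csplit L A B)).
Proof. intros [] A B v H; simpl; apply in_app_iff; auto. Qed.

Lemma choose_bound : forall L G G' P v, choose_at L G G' P -> In v (bound_vars G') -> In v (bound_vars G).
Proof.
  intros L G G' P v [[A [B [i [-> ->]]]]|[x [H [t [-> [-> _]]]]]] Hv.
  - apply hd_csplit_bound; destruct i; auto.
  - rewrite bound_subst in Hv. apply hd_cq_bound; auto.
Qed.

Lemma choose_chead : forall L G G' P, choose_at L G G' P -> chead G.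
Proof. intros [] G G' P [[A [B [i [-> _]]]]|[x [H [t [-> _]]]]]; simpl; auto. Qed.

Lemma bound_repl : forall Gs E Ks F v, bound_in_seq v (Gs ++ E :: Ks ++ [E], F) ->
  bound_in_seq v (Gs ++ E :: Ks, F).
Proof.
  intros Gs E Ks F v [F' [HF Hv]]; exists F'; split; auto. simpl in *.
  destruct HF as [HF|HF]; auto. right. rewrite in_app_iff in *. simpl in *. rewrite in_app_iff in HF.
  simpl in HF. tauto.
Qed.

Lemma hd_split_chead : forall L A B, chead (hd_split L A B). Proof. intros []; simpl; auto. Qed.
Lemma hd_q_chead : forall L x H, chead (hd_q L x H). Proof. intros []; simpl; auto. Qed.

Lemma sub_hd_csplit : forall y s L A B, subst y s (hd_csplit L A B) = hd_csplit (sub_loc y s L) (subst y s A) (subst y s B).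
Proof. intros y s []; reflexivity. Qed.

Lemma sub_hd_cq : forall y s L x H, x <> y -> subst y s (hd_cq L x H) = hd_cq (sub_loc y s L) x (subst y s H).
Proof. intros y s [] x H Hxy; simpl; destruct (Nat.eqb_spec x y); congruence. Qed.

Lemma subst_D : forall n S y z, D n S -> ~ bound_in_seq y S -> ~ bound_in_seq z S -> D n (sub_seq y z S).
Proof.
  induction n; intros S y z HD Hy Hz; [destruct HD|]. destruct HD as [Hp Hf].
  split; [apply proper_sub; auto|].
  destruct Hf as [[L [G [G' [-> [Hc HP]]]]]|[[Gs [E [Ks [F [-> HP]]]]]|[W1 [W2 W3]]]].
  -
    assert (HbP : forall v, bound_in_seq v (plug L G') -> bound_in_seq v (plug L G))
      by (intros v; apply bound_plug; intros; eapply choose_bound; eauto).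
    left. exists (sub_loc y (Var z) L), (subst y (Var z) G), (subst y (Var z) G').
    rewrite <- (sub_plug y z L G') by auto. split; [apply sub_plug; auto|]. split.
    + destruct Hc as [[A [B [i [-> ->]]]]|[x [H [t [-> [-> Ht]]]]]].
      * left. exists (subst y (Var z) A), (subst y (Var z) B), i. split; [apply sub_hd_csplit|].
        destruct i; auto.
      * assert (Hx : bound_in_seq x (plug L (hd_cq L x H))) by (apply bound_in_plug; apply (proj1 (hd_cq_bound L x H))).
        assert (HxH : forall v, In v (bound_vars H) -> bound_in_seq v (plug L (hd_cq L x H)))
          by (intros; apply bound_in_plug; apply (proj2 (hd_cq_bound L x H)); auto).
        right. exists x, (subst y (Var z) H), (subst_term y (Var z) t). split.
        -- apply sub_hd_cq. intro; subst; auto.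
        -- split.
           ++ apply subst_comm; [intro; subst; auto| simpl; intros [<-|[]]; auto| intro; apply Hy; auto].
           ++ destruct Ht as [[c0 ->]|[w [-> Hw]]]; [left; exists c0; auto|].
              right. simpl. destruct (Nat.eqb_spec w y).
              ** exists z; split; auto. intro Hb. apply bound_sub_seq in Hb. apply HbP in Hb. auto.
              ** exists w; split; auto. intro Hb. apply bound_sub_seq in Hb. auto.
    + apply IHn; auto.
  -
    right; left. exists (map (subst y (Var z)) Gs), (subst y (Var z) E), (map (subst y (Var z)) Ks),
      (subst y (Var z) F). unfold sub_seq; simpl; rewrite map_app; simpl; split; auto.
    assert (Hs := IHn _ y z HP). unfold sub_seq in Hs; simpl in Hs. rewrite map_app in Hs; simpl in Hs.
    rewrite map_app in Hs; simpl in Hs. apply Hs.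
    + intro H; apply bound_repl in H; auto.
    + intro H; apply bound_repl in H; auto.
  -
    right; right. split; [|split].
    + intros L' A B HX. destruct (pull_plug _ _ _ _ _ HX (hd_split_chead _ _ _) Hy) as [L [G [-> [-> HG]]]].
      destruct (sub_hd_split _ _ _ _ _ _ (eq_sym HG)) as [H0 [H1 [-> [-> ->]]]].
      destruct (W1 L H0 H1 eq_refl) as [D0 D1].
      assert (Hb : forall H', (forall v, In v (bound_vars H') -> In v (bound_vars (hd_split L H0 H1))) ->
         forall v, bound_in_seq v (plug L H') -> bound_in_seq v (plug L (hd_split L H0 H1)))
        by (intros; eapply bound_plug; eauto).
      split; rewrite <- sub_plug; try apply IHn; auto;
        try (intro Hv; apply Hb in Hv; auto; intros; apply hd_split_bound; auto).
    + intros L' x H' HX. destruct (pull_plug _ _ _ _ _ HX (hd_q_chead _ _ _) Hy) as [L [G [-> [-> HG]]]].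
      destruct (sub_hd_q _ _ _ _ _ _ (eq_sym HG)) as [H [-> ->]].
      { intro; apply Hy; apply bound_in_plug; auto. }
      destruct (W2 L x H eq_refl) as [y0 [Hy0 D0]].
      destruct (fresh_seq (plug L (hd_q L x H)) [y; z; y0]) as [y1 [Hy1 Hy1']].
      simpl in Hy1'.
      destruct (hd_q_bound L x H) as [Hx [HbH HvH]].
      assert (HB : forall t v, bound_in_seq v (plug L (subst x t H)) -> bound_in_seq v (plug L (hd_q L x H)))
        by (intros t v; apply bound_plug; intros w; rewrite bound_subst; auto).
      assert (D1 : D n (plug L (subst x (Var y1) H))).
      { assert (E1 : D n (sub_seq y0 y1 (plug L (subst x (Var y0) H)))).
        { apply IHn; auto.
          + intro Hb; apply HB in Hb; apply Hy0; apply bound_occurs; auto.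
          + intro Hb; apply HB in Hb; apply Hy1; apply bound_occurs; auto. }
        rewrite sub_plug in E1.
        - rewrite (sub_loc_fresh y0 (Var y1) L (hd_q L x H)) in E1 by auto.
          rewrite subst_fresh2 in E1; [apply E1|].
          intro Hv; apply Hy0; apply vars_in_plug; auto.
        - intro Hb; apply HB in Hb; apply Hy0; apply bound_occurs; auto. }
      exists y1. split.
      * intro Ho. destruct (occurs_sub_seq _ _ _ _ Ho); auto.
      * assert (E2 : D n (sub_seq y z (plug L (subst x (Var y1) H)))).
        { apply IHn; auto; intro Hb; apply HB in Hb; auto. }
        rewrite sub_plug in E2.
        -- rewrite subst_comm in E2; [simpl in E2|..].
           ++ destruct (Nat.eqb_spec y1 y); [subst; tauto|]. apply E2.
           ++ intro; subst; apply Hy; apply bound_in_plug; auto.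
           ++ simpl; intros [<-|[]]; apply Hz; apply bound_in_plug; auto.
           ++ intro; apply Hy; apply bound_in_plug; auto.
        -- intro Hb; apply HB in Hb; auto.
    + apply stable_sub; auto.
Qed.

Definition red_at (L : loc) (G G' : form) (z : nat) : Prop :=
  (exists A B, G = hd_split L A B /\ (G' = A \/ G' = B)) \/
  (exists x H, G = hd_q L x H /\ G' = subst x (Var z) H).

Lemma red_chead : forall L G G' z, red_at L G G' z -> chead G.
Proof. intros L G G' z [[A [B [-> _]]]|[x [H [-> _]]]]; [apply hd_split_chead|apply hd_q_chead]. Qed.

Lemma red_shrinks : forall L G G' z, red_at L G G' z -> shrinks G G' z.
Proof.
  intros [] G G' z [[A [B [-> [-> | ->]]]]|[x [H [-> ->]]]]; simpl;
  first [apply shrinks_split | apply shrinks_q].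
Qed.

Lemma red_kind : forall L L' G G' z, lkind L = lkind L' -> red_at L G G' z -> red_at L' G G' z.
Proof. intros [] [] G G' z Hk H; simpl in Hk; try discriminate; exact H. Qed.

Lemma choose_kind : forall L L' G G' P P', lkind L = lkind L' ->
  (forall v, bound_in_seq v P' -> bound_in_seq v P) ->
  choose_at L G G' P -> choose_at L' G G' P'.
Proof.
  intros L L' G G' P P' Hk HP [[A [B [i [-> ->]]]]|[x [H [t [-> [-> Ht]]]]]].
  - left; exists A, B, i; destruct L, L'; simpl in Hk; try discriminate; auto.
  - right; exists x, H, t; split; [destruct L, L'; simpl in Hk; try discriminate; auto|split; auto].
    destruct Ht as [[c ->]|[w [-> Hw]]]; [left; exists c; auto|right; exists w; split; auto].
Qed.

Lemma red_choose_excl : forall L G G' z G'' P, red_at L G G' z -> choose_at L G G'' P -> False.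
Proof.
  intros [] G G' z G'' P [[A [B [-> _]]]|[x [H [-> _]]]] [[A' [B' [i [HH _]]]]|[x' [H' [t [HH _]]]]];
  simpl in HH; discriminate.
Qed.

Lemma inv_D : forall n L G G' z, D n (plug L G) -> red_at L G G' z -> ~ bound_in_seq z (plug L G) ->
  D n (plug L G').
Proof.
  induction n; intros L G G' z HD Hr Hz; [destruct HD|]. destruct HD as [Hp Hf].
  pose proof (red_shrinks _ _ _ _ Hr) as Hsh.
  assert (HbG : forall L0 v, bound_in_seq v (plug L0 G') -> bound_in_seq v (plug L0 G))
    by (intros; eapply bound_plug; [|eauto]; apply Hsh).
  destruct Hf as [[L2 [G2 [G2' [HX [Hc HP]]]]]|[[Gs [E [Ks [F [HX HP]]]]]|[W1 [W2 W3]]]].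
  -
    split; [eapply proper_shrinks; eauto|].
    destruct (two_loc _ _ _ _ HX (red_chead _ _ _ _ Hr) (choose_chead _ _ _ _ Hc))
      as [[-> ->]|[Q [M1 [M2 [HM1 [HM2 [HM1e [HM2e [HS1 HS2]]]]]]]]].
    + exfalso; eapply red_choose_excl; eauto.
    + assert (HP' : D n (plug (M1 G2') G')).
      { apply IHn with G z.
        - rewrite HM1, <- HM2, HM2e. auto.
        - apply red_kind with L; auto. destruct (HS1 G2') as [Hk _]; exact Hk.
        - rewrite HM1, <- HM2, HM2e. intro Hb. apply Hz. rewrite HX.
          eapply bound_plug; [|exact Hb]. intros; eapply choose_bound; eauto. }
      left. exists (M2 G'), G2, G2'. split; [|split].
      * rewrite HM2, <- HM1, HM1e. auto.
      * apply choose_kind with L2 (plug L2 G2'); auto.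
        -- destruct (HS2 G') as [Hk _]; exact Hk.
        -- intros v Hb. rewrite HM2, <- HM1 in Hb. rewrite <- HM2e, HM2, <- HM1. apply HbG; auto.
      * rewrite HM2, <- HM1. auto.
  -
    split; [eapply proper_shrinks; eauto|].
    assert (HbR : forall v, bound_in_seq v (Gs ++ E :: Ks ++ [E], F) -> bound_in_seq v (plug L G))
      by (intros; rewrite HX; apply bound_repl; auto).
    destruct L as [Gs0 c|Gs1 Ks1 F1 c]; simpl in HX; injection HX; intros; subst.
    + right; left. exists Gs, E, Ks, (fill c G'). split; auto.
      apply (IHn (LS (Gs ++ E :: Ks ++ [E]) c) G G' z); auto.
    + destruct (list_split _ _ _ _ _ _ H0) as [[? []]|[[m []]|[m []]]]; subst.
      * assert (D1 : D n (plug (LA Gs (Ks ++ [fill c G]) F c) G')).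
        { apply IHn with G z; auto. }
        assert (D2 : D n (plug (LA (Gs ++ fill c G' :: Ks) [] F c) G')).
        { apply IHn with G z; auto.
          - simpl. rewrite <- app_assoc. exact D1.
          - simpl. rewrite <- app_assoc. intro Hb. apply Hz. apply HbR.
            apply (HbG (LA Gs (Ks ++ [fill c G]) F c)). exact Hb. }
        simpl in D2. rewrite <- app_assoc in D2. simpl in D2.
        right; left. exists Gs, (fill c G'), Ks, F. split; auto.
      * assert (D1 : D n (plug (LA Gs1 (m ++ E :: Ks ++ [E]) F c) G')).
        { apply IHn with G z; auto.
          - simpl. rewrite <- app_assoc in HP. exact HP.
          - simpl. intro Hb. apply Hz. apply HbR. rewrite <- app_assoc. exact Hb. }
        right; left. exists (Gs1 ++ fill c G' :: m), E, Ks, F. simpl. rewrite <- app_assoc. split; auto.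
        rewrite <- app_assoc. exact D1.
      * assert (D1 : D n (plug (LA (Gs ++ E :: m) (Ks1 ++ [E]) F c) G')).
        { apply IHn with G z; auto.
          - simpl. rewrite <- app_assoc. simpl. rewrite <- app_assoc in HP. exact HP.
          - simpl. rewrite <- app_assoc. simpl. intro Hb. apply Hz. apply HbR.
            rewrite <- app_assoc. exact Hb. }
        right; left. exists Gs, E, (m ++ fill c G' :: Ks1), F. simpl. rewrite <- app_assoc. split; auto.
        simpl in D1. rewrite <- app_assoc in D1. simpl in D1. rewrite <- app_assoc. exact D1.
  -
    apply D_S.
    destruct Hr as [[A [B [-> [-> | ->]]]]|[x [H [-> ->]]]].
    + apply (W1 L A B eq_refl).
    + apply (W1 L A B eq_refl).
    + destruct (W2 L x H eq_refl) as [y0 [Hy0 D0]].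
      destruct (hd_q_bound L x H) as [Hx [HbH HvH]].
      assert (HB : forall t v, bound_in_seq v (plug L (subst x t H)) -> bound_in_seq v (plug L (hd_q L x H)))
        by (intros t v; apply bound_plug; intros w; rewrite bound_subst; auto).
      assert (E1 : D n (sub_seq y0 z (plug L (subst x (Var y0) H)))).
      { apply subst_D; auto.
        + intro Hb; apply HB in Hb; apply Hy0; apply bound_occurs; auto.
        + intro Hb; apply HB in Hb; auto. }
      rewrite sub_plug in E1.
      * rewrite (sub_loc_fresh y0 (Var z) L (hd_q L x H)) in E1 by auto.
        rewrite subst_fresh2 in E1; [exact E1|].
        intro Hv; apply Hy0; apply vars_in_plug; auto.
      * intro Hb; apply HB in Hb; apply Hy0; apply bound_occurs; auto.
Qed.

Lemma elem_fill_true : forall M c G, no_and c -> elem G = Top -> forall e, sat M e (elem (fill c G)).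
Proof.
  intros M c G; induction c; simpl; intros Hc HG e; try contradiction.
  - rewrite HG; simpl; auto.
  - left; auto.
  - right; auto.
  - intros d; auto.
  - exists (dom_inh M); auto.
Qed.

Lemma elem_fill_false : forall M c G, no_or c -> elem G = Bot -> forall e, ~ sat M e (elem (fill c G)).
Proof.
  intros M c G; induction c; simpl; intros Hc HG e; try contradiction.
  - rewrite HG; simpl; auto.
  - intros []; eapply IHc; eauto.
  - intros []; eapply IHc; eauto.
  - intros H; apply (IHc Hc HG (upd e x (dom_inh M))); apply H.
  - intros [d H]; apply (IHc Hc HG (upd e x d)); apply H.
Qed.

Lemma stable_intro : forall L G, good L -> ((exists A B, G = hd_split L A B) \/ (exists x H, G = hd_q L x H)) ->
  stable (plug L G).
Proof.
  intros [Gs c|Gs Ks F c] G Hg HG M e; unfold elem_seq; simpl in *.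
  - right. apply elem_fill_true; auto. destruct HG as [[A [B ->]]|[x [H ->]]]; reflexivity.
  - left. apply sat_neg. intro Hs. apply (elem_fill_false M c G Hg) with e.
    + destruct HG as [[A [B ->]]|[x [H ->]]]; reflexivity.
    + apply (sat_big_and _ _ _ Hs). apply in_map. apply in_app_iff; simpl; auto.
Qed.

Lemma hd_split_inj : forall L A B A' B', hd_split L A B = hd_split L A' B' -> A = A' /\ B = B'.
Proof. intros [] A B A' B' H; simpl in H; injection H; auto. Qed.
Lemma hd_q_inj : forall L x H x' H', hd_q L x H = hd_q L x' H' -> x = x' /\ H = H'.
Proof. intros [] x H x' H' E; simpl in E; injection E; auto. Qed.
Lemma hd_split_q : forall L A B x H, hd_split L A B <> hd_q L x H.
Proof. intros [] A B x H; simpl; discriminate. Qed.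
Lemma hd_split_kind : forall L L' A B, lkind L = lkind L' -> hd_split L A B = hd_split L' A B.
Proof. intros [] [] A B H; simpl in H; try discriminate; reflexivity. Qed.
Lemma hd_q_kind : forall L L' x H, lkind L = lkind L' -> hd_q L x H = hd_q L' x H.
Proof. intros [] [] x H E; simpl in E; try discriminate; reflexivity. Qed.

Lemma red_cnt : forall L G G' z, red_at L G G' z -> cnt G' < cnt G.
Proof.
  intros [] G G' z [[A [B [-> [-> | ->]]]]|[x [H [-> ->]]]]; simpl; rewrite ?cnt_subst; lia.
Qed.

Lemma prov_inv : forall L G G' z, provable (plug L G) -> red_at L G G' z -> ~ bound_in_seq z (plug L G) ->
  provable (plug L G').
Proof.
  intros. destruct (prov_D _ H) as [n Hn]. eapply D_prov. eapply inv_D; eauto.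
Qed.

Definition desig (L : loc) (G : form) (dy : nat) : Prop :=
  (exists G0 G1, G = hd_split L G0 G1 /\ provable (plug L G0) /\ provable (plug L G1)) \/
  (exists x H, G = hd_q L x H /\ ~ occurs_seq dy (plug L G) /\ provable (plug L (subst x (Var dy) H))).

Lemma intro_main : forall n L G dy, cnt_seq (plug L G) < n -> good L -> proper_seq (plug L G) ->
  desig L G dy -> provable (plug L G).
Proof.
  induction n; intros L G dy Hn Hg Hp Hd; [lia|].
  assert (Hc : chead G) by (destruct Hd as [[G0 [G1 [-> _]]]|[x [H [-> _]]]];
                            [apply hd_split_chead|apply hd_q_chead]).
  assert (Hother : forall L' G' G'' z, lindep L G' L' G -> plug L G = plug L' G' ->
            red_at L' G' G'' z -> ~ occurs_seq z (plug L G) -> z <> dy -> provable (plug L' G'')).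
  { intros L' G' G'' z [Q [M1 [M2 [HM1 [HM2 [HM1e [HM2e [HS1 HS2]]]]]]]] HX Hr Hz Hzd.
    assert (HbX : ~ bound_in_seq z (plug L G)) by (intro; apply Hz; apply bound_occurs; auto).
    assert (Heq : plug L' G'' = plug (M1 G'') G) by (rewrite <- HM2e, HM2, HM1; auto).
    assert (HX' : plug L G = plug (M2 G) G') by (rewrite HM2e; auto).
    rewrite Heq. apply IHn with dy.
    - rewrite <- Heq. rewrite HX in Hn. pose proof (cnt_plug_lt L' _ _ (red_cnt _ _ _ _ Hr)). lia.
    - destruct (HS1 G'') as [_ Hgg]. apply Hgg; auto.
    - rewrite <- Heq. apply proper_shrinks with G' z; [rewrite <- HX; auto| eapply red_shrinks; eauto|].
      rewrite <- HX; auto.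
    - assert (Hk : lkind L = lkind (M1 G'')) by apply (HS1 G'').
      assert (Hk2 : forall Z, lkind L' = lkind (M2 Z)) by (intros; apply (HS2 Z)).
      destruct Hd as [[G0 [G1 [-> [P0 P1]]]]|[x [H [-> [Hdy P]]]]].
      + left. exists G0, G1. split; [apply hd_split_kind; auto|].
        split.
        * rewrite HM1, <- HM2. apply prov_inv with G' z.
          -- rewrite HM2, <- HM1, HM1e; auto.
          -- apply red_kind with L'; auto.
          -- rewrite HM2, <- HM1, HM1e. intro Hb. apply HbX.
             eapply bound_plug; [|exact Hb]. intros; apply hd_split_bound; auto.
        * rewrite HM1, <- HM2. apply prov_inv with G' z.
          -- rewrite HM2, <- HM1, HM1e; auto.
          -- apply red_kind with L'; auto.
          -- rewrite HM2, <- HM1, HM1e. intro Hb. apply HbX.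
             eapply bound_plug; [|exact Hb]. intros; apply hd_split_bound; auto.
      + right. exists x, H. split; [apply hd_q_kind; auto|]. split.
        * rewrite <- Heq. intro Ho.
          destruct (vars_plug (fun v => v = z) G' G'' (proj2 (proj2 (red_shrinks _ _ _ _ Hr))) L' dy Ho)
            as [Ho'|]; [rewrite <- HX in Ho'; auto| auto].
        * rewrite HM1, <- HM2. apply prov_inv with G' z.
          -- rewrite HM2, <- HM1, HM1e; auto.
          -- apply red_kind with L'; auto.
          -- rewrite HM2, <- HM1, HM1e. intro Hb. apply HbX.
             eapply bound_plug; [|exact Hb]. intros v; rewrite bound_subst; intros; apply hd_q_bound; auto. }
  destruct (fresh_seq (plug L G) [dy]) as [z [Hz Hzd]].
  assert (Hzd' : z <> dy) by (intro; subst; simpl in Hzd; tauto).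
  apply prov_step; auto. right; right. split; [|split].
  - intros L' A B HX.
    destruct (two_loc _ _ _ _ HX Hc (hd_split_chead _ _ _)) as [[<- ->]|Hi].
    + destruct Hd as [[G0 [G1 [HG [P0 P1]]]]|[x [H [HG _]]]].
      * apply hd_split_inj in HG; destruct HG; subst; auto.
      * exfalso; eapply hd_split_q; eauto.
    + split; apply Hother with (hd_split L' A B) z; auto; left; exists A, B; auto.
  - intros L' x' H' HX.
    destruct (two_loc _ _ _ _ HX Hc (hd_q_chead _ _ _)) as [[<- ->]|Hi].
    + destruct Hd as [[G0 [G1 [HG _]]]|[x [H [HG [Hdy P]]]]].
      * exfalso; eapply hd_split_q; eauto.
      * apply hd_q_inj in HG; destruct HG; subst. exists dy; split; auto.
    + exists z; split; [auto|].
      apply Hother with (hd_q L' x' H') z; auto. right; exists x', H'; auto.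
  - apply stable_intro; auto.
    destruct Hd as [[G0 [G1 [-> _]]]|[x [H [-> _]]]]; [left|right]; eauto.
Qed.

Theorem fact11p2 :
  (* ⊓-Introduction *)
  (forall (Es : list form) (c : ctx) (G0 G1 : form),
     no_and c ->
     proper_seq (Es, fill c (Chand G0 G1)) ->
     provable (Es, fill c G0) ->
     provable (Es, fill c G1) ->
     provable (Es, fill c (Chand G0 G1))) /\
  (* ⊔-Introduction *)
  (forall (Es : list form) (c : ctx) (G0 G1 : form) (Ks : list form) (H : form),
     no_or c ->
     proper_seq (Es ++ fill c (Chor G0 G1) :: Ks, H) ->
     provable (Es ++ fill c G0 :: Ks, H) ->
     provable (Es ++ fill c G1 :: Ks, H) ->
     provable (Es ++ fill c (Chor G0 G1) :: Ks, H)) /\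
  (* ⊓x-Introduction *)
  (forall (Es : list form) (c : ctx) (x : nat) (G : form) (y : nat),
     no_and c ->
     proper_seq (Es, fill c (Chall x G)) ->
     ~ occurs_seq y (Es, fill c (Chall x G)) ->
     provable (Es, fill c (subst x (Var y) G)) ->
     provable (Es, fill c (Chall x G))) /\
  (* ⊔x-Introduction *)
  (forall (Es : list form) (c : ctx) (x : nat) (G : form) (Ks : list form)
          (H : form) (y : nat),
     no_or c ->
     proper_seq (Es ++ fill c (Chex x G) :: Ks, H) ->
     ~ occurs_seq y (Es ++ fill c (Chex x G) :: Ks, H) ->
     provable (Es ++ fill c (subst x (Var y) G) :: Ks, H) ->
     provable (Es ++ fill c (Chex x G) :: Ks, H)).
Proof.
  split; [|split; [|split]].
  - intros Es c G0 G1 Hc Hp P0 P1.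
    apply (intro_main (S (cnt_seq (Es, fill c (Chand G0 G1)))) (LS Es c) (Chand G0 G1) 0); auto.
    left; exists G0, G1; auto.
  - intros Es c G0 G1 Ks H Hc Hp P0 P1.
    apply (intro_main (S (cnt_seq (Es ++ fill c (Chor G0 G1) :: Ks, H))) (LA Es Ks H c) (Chor G0 G1) 0); auto.
    left; exists G0, G1; auto.
  - intros Es c x G y Hc Hp Hy P.
    apply (intro_main (S (cnt_seq (Es, fill c (Chall x G)))) (LS Es c) (Chall x G) y); auto.
    right; exists x, G; auto.
  - intros Es c x G Ks H y Hc Hp Hy P.
    apply (intro_main (S (cnt_seq (Es ++ fill c (Chex x G) :: Ks, H))) (LA Es Ks H c) (Chex x G) y); auto.
    right; exists x, G; auto.
Qed.
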